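(* Let $r\in(0,1)$, $\kappa>0$, $\alpha,\beta\ge0$, and $V_r=[r,1-]\cup\{1+\}$. Let $A^I$ be the operator in $C(V_r)$ whose domain consists of those $f\in C(V_r)$ which, restricted to $[r,1-]$, are twice continuously differentiable and satisfy \[f'(r)=0,\qquad f'(1-)=\beta\,(f(1+)-f(1-)),\] given by $A^If(1+)=-\alpha f(1+)+\alpha f(1-)$ and $A^If(\rho)=\kappa\rho^2f''(\rho)+\kappa\rho f'(\rho)$ for $\rho\in[r,1-]$. Then $A^I$ is a conservative Feller generator in $C(V_r)$.
   Context: $V_r$ is the disjoint union of the interval $[r,1-]$ and an isolated point $1+$ ($1-$, $1+$ are distinct copies of $1$); $C(V_r)$ is the space of continuous functions on $V_r$ with the supremum norm. A conservative Feller generator is the generator of a strongly continuous semigroup of positive operators on $C(V_r)$ fixing the constant function $1$. *)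

(* Defs.v *)
From Stdlib Require Import Reals.
From Coquelicot Require Import Coquelicot.
Open Scope R_scope.

(* Points of V_r = [r,1-] (disjoint union) {1+}.
   VL x represents x in [r,1-] (VL 1 is the point 1-), VPlus is 1+.
   Functions on V_r are represented as functions Vpt -> R; only their
   values at points of V_r (see inV) matter. *)
Inductive Vpt : Type := VL (x : R) | VPlus.

Definition Iv (r x : R) : Prop := r <= x <= 1.

Definition inV (r : R) (p : Vpt) : Prop :=
  match p with VL x => Iv r x | VPlus => True end.

Definition cont_on_I (r : R) (g : R -> R) : Prop :=
  forall x, Iv r x -> filterlim g (within (Iv r) (locally x)) (locally (g x)).

(* f belongs to C(V_r): continuous on [r,1-]; 1+ is isolated, so no condition there *)
Definition inC (r : R) (f : Vpt -> R) : Prop := cont_on_I r (fun x => f (VL x)).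

Definition deriv_on_I (r : R) (g dg : R -> R) : Prop :=
  forall x, Iv r x ->
    filterlim (fun y => (g y - g x) / (y - x))
      (within (fun y => Iv r y /\ y <> x) (locally x)) (locally (dg x)).

Definition C2_on_I (r : R) (g g1 g2 : R -> R) : Prop :=
  deriv_on_I r g g1 /\ deriv_on_I r g1 g2 /\ cont_on_I r g1 /\ cont_on_I r g2.

Definition conservative_Feller_semigroup (r : R)
    (T : R -> (Vpt -> R) -> (Vpt -> R)) : Prop :=
  (forall t f, 0 <= t -> inC r f -> inC r (T t f)) /\
  (forall t f g a b, 0 <= t -> inC r f -> inC r g -> forall p, inV r p ->
      T t (fun q => a * f q + b * g q) p = a * T t f p + b * T t g p) /\
  (forall t f, 0 <= t -> inC r f -> (forall p, inV r p -> 0 <= f p) ->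
      forall p, inV r p -> 0 <= T t f p) /\
  (forall t, 0 <= t -> forall p, inV r p -> T t (fun _ => 1) p = 1) /\
  (forall f, inC r f -> forall p, inV r p -> T 0 f p = f p) /\
  (forall s t f, 0 <= s -> 0 <= t -> inC r f -> forall p, inV r p ->
      T (s + t) f p = T s (T t f) p) /\
  (forall f, inC r f -> forall eps, 0 < eps -> exists delta, 0 < delta /\
      forall t, 0 <= t < delta -> forall p, inV r p -> Rabs (T t f p - f p) < eps).

Definition generator_graph (r : R) (T : R -> (Vpt -> R) -> (Vpt -> R))
    (f h : Vpt -> R) : Prop :=
  forall eps, 0 < eps -> exists delta, 0 < delta /\
    forall t, 0 < t < delta -> forall p, inV r p ->
      Rabs ((T t f p - f p) / t - h p) < eps.

(* An operator given by its graph A (A f h means f in D(A), A f = h) is a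
   conservative Feller generator in C(V_r): it is the generator of a
   conservative Feller semigroup (graph equality on C(V_r)). *)
Definition conservative_Feller_generator (r : R)
    (A : (Vpt -> R) -> (Vpt -> R) -> Prop) : Prop :=
  exists T, conservative_Feller_semigroup r T /\
    forall f h, inC r f -> inC r h -> (generator_graph r T f h <-> A f h).

Definition AI (r kappa alpha beta : R) (f h : Vpt -> R) : Prop :=
  inC r f /\
  exists g1 g2 : R -> R,
    C2_on_I r (fun x => f (VL x)) g1 g2 /\
    g1 r = 0 /\
    g1 1 = beta * (f VPlus - f (VL 1)) /\
    h VPlus = - alpha * f VPlus + alpha * f (VL 1) /\
    (forall x, Iv r x -> h (VL x) = kappa * x ^ 2 * g2 x + kappa * x * g1 x).

(* Main.v *)
Require Import Defs.
From Stdlib Require Import Reals Lra Lia ZArith ClassicalEpsilon Classical.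
From Coquelicot Require Import Coquelicot.
Open Scope R_scope.

Lemma ballR (x e y : R) : ball x e y <-> Rabs (y - x) < e.
Proof. reflexivity. Qed.

Definition cont_ed (P : R -> Prop) (g : R -> R) (x : R) : Prop :=
  forall eps, 0 < eps -> exists d, 0 < d /\
     forall y, P y -> Rabs (y - x) < d -> Rabs (g y - g x) < eps.

Lemma filterlim_within_ed (P : R -> Prop) (g : R -> R) (x l : R) :
  filterlim g (within P (locally x)) (locally l) <->
  (forall eps, 0 < eps -> exists d, 0 < d /\
     forall y, P y -> Rabs (y - x) < d -> Rabs (g y - l) < eps).
Proof.
  split.
  - intros H eps He.
    destruct (proj1 (filterlim_locally _ _) H (mkposreal eps He)) as [d Hd].
    exists (pos d); split; [apply cond_pos|].
    intros y Hy Hyx. apply (Hd y); [apply Hyx| exact Hy].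
  - intros H. apply filterlim_locally. intros eps.
    destruct (H eps (cond_pos eps)) as [d [Hd0 Hd]].
    exists (mkposreal d Hd0). intros y Hy HIy. apply (Hd y HIy Hy).
Qed.

Lemma filterlim_locally_ed (g : R -> R) (x l : R) :
  filterlim g (locally x) (locally l) <->
  (forall eps, 0 < eps -> exists d, 0 < d /\
     forall y, Rabs (y - x) < d -> Rabs (g y - l) < eps).
Proof.
  split.
  - intros H eps He.
    destruct (proj1 (filterlim_locally _ _) H (mkposreal eps He)) as [d Hd].
    exists (pos d); split; [apply cond_pos|].
    intros y Hyx. apply (Hd y); apply Hyx.
  - intros H. apply filterlim_locally. intros eps.
    destruct (H eps (cond_pos eps)) as [d [Hd0 Hd]].
    exists (mkposreal d Hd0). intros y Hy. apply (Hd y Hy).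
Qed.

Lemma cont_on_I_ed (r : R) (g : R -> R) :
  cont_on_I r g <-> forall x, Iv r x -> cont_ed (Iv r) g x.
Proof.
  split.
  - intros H x Hx. unfold cont_ed. apply (proj1 (filterlim_within_ed (Iv r) g x (g x))). apply H; auto.
  - intros H x Hx. apply (proj2 (filterlim_within_ed (Iv r) g x (g x))). apply H; auto.
Qed.

Definition deriv_ed (r : R) (g dg : R -> R) (x : R) : Prop :=
  forall eps, 0 < eps -> exists d, 0 < d /\
     forall y, Iv r y -> y <> x -> Rabs (y - x) < d ->
        Rabs ((g y - g x) / (y - x) - dg x) < eps.

Lemma deriv_on_I_ed (r : R) (g dg : R -> R) :
  deriv_on_I r g dg <-> forall x, Iv r x -> deriv_ed r g dg x.
Proof.
  split.
  - intros H x Hx eps He.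
    destruct (proj1 (filterlim_within_ed _ _ _ _) (H x Hx) eps He) as [d [Hd H1]].
    exists d; split; [exact Hd|]. intros y Hy Hne Hyx. apply H1; auto.
  - intros H x Hx. apply (proj2 (filterlim_within_ed _ _ _ _)). intros eps He.
    destruct (H x Hx eps He) as [d [Hd H1]].
    exists d; split; auto. intros y [Hy Hne] Hyx. apply H1; auto.
Qed.

Definition clamp (r x : R) : R := Rmax r (Rmin 1 x).

Lemma clamp_id r x : Iv r x -> clamp r x = x.
Proof.
  unfold clamp, Iv; intros [H1 H2].
  rewrite Rmin_right by lra. rewrite Rmax_right by lra. reflexivity.
Qed.

Lemma clamp_Iv r x : r <= 1 -> Iv r (clamp r x).
Proof.
  unfold clamp, Iv; intros H. split.
  - apply Rmax_l.
  - apply Rmax_lub; auto. apply Rmin_l.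
Qed.

Lemma clamp_lip r x y : r <= 1 -> Rabs (clamp r x - clamp r y) <= Rabs (x - y).
Proof.
  intros H. unfold clamp.
  unfold Rmax, Rmin.
  repeat (destruct Rle_dec); repeat (destruct Rle_dec);
  unfold Rabs; repeat destruct Rcase_abs; lra.
Qed.

Lemma cont_clamp_global r (g : R -> R) : r <= 1 -> cont_on_I r g ->
  forall x, forall eps, 0 < eps -> exists d, 0 < d /\
     forall y, Rabs (y - x) < d -> Rabs (g (clamp r y) - g (clamp r x)) < eps.
Proof.
  intros Hr Hc x eps He.
  destruct (proj1 (cont_on_I_ed r g) Hc (clamp r x) (clamp_Iv r x Hr) eps He) as [d [Hd H1]].
  exists d; split; auto. intros y Hy. apply H1. apply clamp_Iv; auto.
  eapply Rle_lt_trans; [apply clamp_lip; auto| exact Hy].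
Qed.

Lemma contpt_clamp r (g : R -> R) : r <= 1 -> cont_on_I r g ->
  forall x, continuity_pt (fun y => g (clamp r y)) x.
Proof.
  intros Hr Hc x. apply continuity_pt_filterlim.
  apply (proj2 (filterlim_locally_ed _ _ _)). apply cont_clamp_global; auto.
Qed.

Lemma continuous_clamp r (g : R -> R) : r <= 1 -> cont_on_I r g ->
  forall x, continuous (fun y => g (clamp r y)) x.
Proof.
  intros Hr Hc x. apply (proj2 (filterlim_locally_ed _ _ _)). apply cont_clamp_global; auto.
Qed.

Lemma cont_on_I_ext r (g g' : R -> R) : (forall x, Iv r x -> g x = g' x) ->
  cont_on_I r g -> cont_on_I r g'.
Proof.
  intros He Hc. apply cont_on_I_ed. intros x Hx eps Heps.
  destruct (proj1 (cont_on_I_ed r g) Hc x Hx eps Heps) as [d [Hd H1]].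
  exists d; split; auto. intros y Hy Hyx. rewrite <- !He; auto.
Qed.

Lemma cont_on_I_plus r (g g' : R -> R) : cont_on_I r g -> cont_on_I r g' ->
  cont_on_I r (fun x => g x + g' x).
Proof.
  intros H1 H2 x Hx.
  eapply filterlim_comp_2. apply H1; auto. apply H2; auto.
  apply (filterlim_plus (g x) (g' x)).
Qed.

Lemma cont_on_I_mult r (g g' : R -> R) : cont_on_I r g -> cont_on_I r g' ->
  cont_on_I r (fun x => g x * g' x).
Proof.
  intros H1 H2 x Hx.
  eapply filterlim_comp_2. apply H1; auto. apply H2; auto.
  apply (filterlim_mult (g x) (g' x)).
Qed.

Lemma cont_on_I_const r c : cont_on_I r (fun _ => c).
Proof. intros x Hx. apply filterlim_const. Qed.

Lemma cont_on_I_lin r (g g' : R -> R) a b : cont_on_I r g -> cont_on_I r g' ->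
  cont_on_I r (fun x => a * g x + b * g' x).
Proof.
  intros H1 H2. apply cont_on_I_plus; apply cont_on_I_mult; auto; apply cont_on_I_const.
Qed.

Lemma cont_on_I_id r : cont_on_I r (fun x => x).
Proof.
  apply cont_on_I_ed. intros x Hx eps He. exists eps; split; auto.
Qed.

Lemma cont_on_I_global r (g : R -> R) : (forall x, continuous g x) -> cont_on_I r g.
Proof.
  intros H x Hx. eapply filterlim_filter_le_1; [apply filter_le_within| apply H].
Qed.

Lemma deriv_cont r (g dg : R -> R) : deriv_on_I r g dg -> cont_on_I r g.
Proof.
  intros Hd. apply cont_on_I_ed. intros x Hx eps He.
  destruct (proj1 (deriv_on_I_ed r g dg) Hd x Hx 1 Rlt_0_1) as [d [Hd0 H1]].
  exists (Rmin d (eps / (Rabs (dg x) + 1))). split.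
  { apply Rmin_pos; auto. apply Rdiv_lt_0_compat; auto. pose proof (Rabs_pos (dg x)); lra. }
  intros y Hy Hyx.
  destruct (Req_dec y x) as [->|Hne].
  { replace (g x - g x) with 0 by ring. rewrite Rabs_R0; auto. }
  assert (Hq := H1 y Hy Hne (Rlt_le_trans _ _ _ Hyx (Rmin_l _ _))).
  assert (Hyx2 := Rlt_le_trans _ _ _ Hyx (Rmin_r _ _)).
  assert (Hp : 0 < Rabs (y - x)) by (apply Rabs_pos_lt; lra).
  replace (g y - g x) with (((g y - g x) / (y - x)) * (y - x)) by (field; lra).
  rewrite Rabs_mult.
  assert (Rabs ((g y - g x) / (y - x)) < Rabs (dg x) + 1).
  { revert Hq. generalize ((g y - g x) / (y - x)). intros q Hq.
    unfold Rabs in *; repeat destruct Rcase_abs; lra. }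
  assert (Hpos : 0 < Rabs (dg x) + 1) by (pose proof (Rabs_pos (dg x)); lra).
  apply Rlt_le_trans with ((Rabs (dg x) + 1) * Rabs (y - x)).
  { apply Rmult_lt_compat_r; auto. }
  apply Rle_trans with ((Rabs (dg x) + 1) * (eps / (Rabs (dg x) + 1))).
  { apply Rmult_le_compat_l; lra. }
  right; field; lra.
Qed.

Lemma is_derive_ed (g : R -> R) x l : is_derive g x l ->
  forall eps, 0 < eps -> exists d, 0 < d /\ forall y, y <> x -> Rabs (y - x) < d ->
    Rabs ((g y - g x) / (y - x) - l) < eps.
Proof.
  intros H eps He. apply is_derive_Reals in H.
  destruct (H eps He) as [d Hd]. exists (pos d); split; [apply cond_pos|].
  intros y Hne Hyx. specialize (Hd (y - x)). 
  assert (E : x + (y - x) = y) by (unfold Rminus; rewrite Rplus_comm, Rplus_assoc, Rplus_opp_l, Rplus_0_r; reflexivity).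
  rewrite E in Hd.
  apply Hd; auto. lra.
Qed.

Lemma deriv_on_I_global r (g dg : R -> R) : (forall x, Iv r x -> is_derive g x (dg x)) ->
  deriv_on_I r g dg.
Proof.
  intros H. apply deriv_on_I_ed. intros x Hx eps He.
  destruct (is_derive_ed g x (dg x) (H x Hx) eps He) as [d [Hd H1]].
  exists d; split; auto.
Qed.

Lemma deriv_interior r (g dg : R -> R) x : deriv_on_I r g dg -> r < x < 1 ->
  is_derive g x (dg x).
Proof.
  intros Hd Hx. apply is_derive_Reals. intros eps He.
  assert (Hx' : Iv r x) by (unfold Iv; lra).
  destruct (proj1 (deriv_on_I_ed r g dg) Hd x Hx' eps He) as [d [Hd0 H1]].
  assert (Hm : 0 < Rmin d (Rmin (x - r) (1 - x))).
  { apply Rmin_pos; auto. apply Rmin_pos; lra. }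
  exists (mkposreal _ Hm). intros h Hh0 Hh. simpl in Hh.
  assert (Hh1 := Rlt_le_trans _ _ _ Hh (Rmin_l _ _)).
  assert (Hh2 := Rlt_le_trans _ _ _ Hh (Rmin_r _ _)).
  assert (Hh3 := Rlt_le_trans _ _ _ Hh2 (Rmin_l _ _)).
  assert (Hh4 := Rlt_le_trans _ _ _ Hh2 (Rmin_r _ _)).
  specialize (H1 (x + h)). replace (x + h - x) with h in H1 by ring.
  apply H1; auto.
  - unfold Iv. unfold Rabs in *; destruct Rcase_abs; lra.
  - lra.
Qed.

Lemma MVT_I r (g dg : R -> R) a b : r <= 1 -> deriv_on_I r g dg -> r <= a -> a < b -> b <= 1 ->
  exists c, a <= c <= b /\ g b - g a = dg c * (b - a).
Proof.
  intros Hr Hd Ha Hab Hb.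
  pose (G := fun y => g (clamp r y)).
  destruct (MVT_gen G a b dg) as [c [Hc Heq]].
  - rewrite Rmin_left, Rmax_right by lra. intros x Hx.
    assert (Hxi : r < x < 1) by lra.
    assert (HD := deriv_interior r g dg x Hd Hxi).
    apply is_derive_Reals in HD. apply is_derive_Reals.
    intros eps He. destruct (HD eps He) as [d Hd0].
    assert (Hm : 0 < Rmin d (Rmin (x - r) (1 - x))).
    { apply Rmin_pos; [apply cond_pos|]. apply Rmin_pos; lra. }
    exists (mkposreal _ Hm). intros h Hh0 Hh. simpl in Hh.
    assert (Hh1 := Rlt_le_trans _ _ _ Hh (Rmin_l _ _)).
    assert (Hh2 := Rlt_le_trans _ _ _ Hh (Rmin_r _ _)).
    assert (Hh3 := Rlt_le_trans _ _ _ Hh2 (Rmin_l _ _)).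
    assert (Hh4 := Rlt_le_trans _ _ _ Hh2 (Rmin_r _ _)).
    unfold G. rewrite !clamp_id.
    + apply Hd0; auto.
    + unfold Iv; lra.
    + unfold Iv. unfold Rabs in *; destruct Rcase_abs; lra.
  - intros x _. apply contpt_clamp; auto. eapply deriv_cont; eauto.
  - rewrite Rmin_left, Rmax_right in Hc by lra.
    exists c; split; auto. unfold G in Heq. rewrite !clamp_id in Heq; auto; unfold Iv; lra.
Qed.

Definition eqV (r : R) (f g : Vpt -> R) := forall p, inV r p -> f p = g p.
Definition bnd (r : R) (f : Vpt -> R) (M : R) := forall p, inV r p -> Rabs (f p) <= M.

Lemma inC_lin r f g a b : inC r f -> inC r g -> inC r (fun p => a * f p + b * g p).
Proof. intros H1 H2. unfold inC in *. apply (cont_on_I_lin r _ _ a b H1 H2). Qed.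

Lemma inC_const r c : inC r (fun _ => c).
Proof. unfold inC. apply (cont_on_I_const r c). Qed.

Lemma inC_ext r f g : eqV r f g -> inC r f -> inC r g.
Proof. intros He H. unfold inC. eapply cont_on_I_ext; [|exact H]. intros x Hx; apply (He (VL x)); auto. Qed.

Lemma max_V r f : r <= 1 -> inC r f -> exists p, inV r p /\ forall q, inV r q -> f q <= f p.
Proof.
  intros Hr Hc.
  destruct (continuity_ab_maj (fun y => f (VL (clamp r y))) r 1 Hr) as [x [Hx1 Hx2]].
  { intros c _. apply (contpt_clamp r (fun y => f (VL y))); auto. }
  destruct (Rle_dec (f VPlus) (f (VL (clamp r x)))) as [Hle|Hlt].
  - exists (VL (clamp r x)). split. apply clamp_Iv; auto.
    intros [y|] Hq; auto. simpl in Hq. specialize (Hx1 y Hq). rewrite clamp_id in Hx1; auto.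
  - exists VPlus. split; [exact I|]. intros [y|] Hq; [|lra].
    simpl in Hq. specialize (Hx1 y Hq). rewrite clamp_id in Hx1; auto. lra.
Qed.

Lemma min_V r f : r <= 1 -> inC r f -> exists p, inV r p /\ forall q, inV r q -> f p <= f q.
Proof.
  intros Hr Hc. destruct (max_V r (fun p => -1 * f p + 0 * f p) Hr) as [p [Hp H]].
  { apply inC_lin; auto. }
  exists p; split; auto. intros q Hq. specialize (H q Hq). lra.
Qed.

Lemma bnd_exists r f : r <= 1 -> inC r f -> exists M, 0 <= M /\ bnd r f M.
Proof.
  intros Hr Hc. destruct (max_V r f Hr Hc) as [p [Hp H1]].
  destruct (min_V r f Hr Hc) as [q [Hq H2]].
  exists (Rabs (f p) + Rabs (f q)). split.
  { pose proof (Rabs_pos (f p)); pose proof (Rabs_pos (f q)); lra. }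
  intros s Hs. specialize (H1 s Hs). specialize (H2 s Hs).
  unfold Rabs; repeat destruct Rcase_abs; lra.
Qed.

Lemma unif_cont r f : r <= 1 -> inC r f -> forall eps, 0 < eps -> exists d, 0 < d /\
  forall x y, Iv r x -> Iv r y -> Rabs (x - y) < d -> Rabs (f (VL x) - f (VL y)) < eps.
Proof.
  intros Hr Hc eps He.
  destruct (Heine (fun y => f (VL (clamp r y))) (Iv r) (compact_P3 r 1)) with (mkposreal eps He)
    as [d Hd].
  { intros x _. apply (contpt_clamp r (fun y => f (VL y))); auto. }
  exists (pos d); split; [apply cond_pos|].
  intros x y Hx Hy Hxy. specialize (Hd x y Hx Hy Hxy). simpl in Hd.
  rewrite !clamp_id in Hd; auto.
Qed.

Lemma unif_limit_C r (F : nat -> Vpt -> R) f : (forall n, inC r (F n)) ->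
  (forall eps, 0 < eps -> exists N, forall n p, (N <= n)%nat -> inV r p -> Rabs (F n p - f p) <= eps) ->
  inC r f.
Proof.
  intros HC HU. apply cont_on_I_ed. intros x Hx eps He.
  destruct (HU (eps / 4)) as [N HN]; [lra|].
  destruct (proj1 (cont_on_I_ed r _) (HC N) x Hx (eps / 4)) as [d [Hd H1]]; [lra|].
  exists d; split; auto. intros y Hy Hyx.
  specialize (H1 y Hy Hyx).
  assert (A1 := HN N (VL y) (le_n _) Hy).
  assert (A2 := HN N (VL x) (le_n _) Hx).
  revert H1 A1 A2. generalize (F N (VL y)) (F N (VL x)) (f (VL y)) (f (VL x)).
  intros a b c e H1 A1 A2. unfold Rabs in *; repeat destruct Rcase_abs; lra.
Qed.

Definition e1 (r : R) (p : Vpt) : R := match p with VL x => (x - r) ^ 2 | VPlus => 0 end.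
Definition e2 (r : R) (p : Vpt) : R := match p with VL x => (x - r) ^ 4 | VPlus => 0 end.
Definition eI (p : Vpt) : R := match p with VL x => 0 | VPlus => 1 end.

Definition closD (r : R) (A : (Vpt -> R) -> (Vpt -> R) -> Prop) (e : Vpt -> R) : Prop :=
  forall eps, 0 < eps -> exists f h, A f h /\ forall p, inV r p -> Rabs (f p - e p) <= eps.

Record AHyp (r : R) (A : (Vpt -> R) -> (Vpt -> R) -> Prop) : Prop := {
  ah_r : 0 < r < 1;
  ah_C : forall f h, A f h -> inC r f /\ inC r h;
  ah_ext : forall f h f' h', A f h -> eqV r f f' -> eqV r h h' -> A f' h';
  ah_lin : forall f h g k a b, A f h -> A g k ->
      A (fun p => a * f p + b * g p) (fun p => a * h p + b * k p);
  ah_1 : A (fun _ => 1) (fun _ => 0);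
  ah_max : forall f h p, A f h -> inV r p -> (forall q, inV r q -> f q <= f p) -> h p <= 0;
  ah_res : forall eta, 0 < eta -> forall g, inC r g ->
      exists u h, A u h /\ forall p, inV r p -> u p - eta * h p = g p;
  ah_t1 : closD r A (e1 r);
  ah_t2 : closD r A (e2 r);
  ah_tI : closD r A eI
}.

Lemma le_eps_eq (x y : R) : (forall eps, 0 < eps -> Rabs (x - y) <= eps) -> x = y.
Proof.
  intros H. destruct (Req_dec x y) as [|Hne]; auto. exfalso.
  assert (Hp : 0 < Rabs (x - y)) by (apply Rabs_pos_lt; lra).
  specialize (H (Rabs (x - y) / 2) ltac:(lra)). lra.
Qed.

Lemma le_eps_le (x y : R) : (forall eps, 0 < eps -> x <= y + eps) -> x <= y.
Proof.
  intros H. destruct (Rle_dec x y) as [|Hn]; auto. exfalso.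
  specialize (H ((x - y) / 2) ltac:(lra)). lra.
Qed.

Lemma abs_bounds x a : Rabs x <= a -> - a <= x <= a.
Proof. unfold Rabs; destruct Rcase_abs; lra. Qed.

Definition nfl (x : R) : nat := Z.to_nat (floor x).
Lemma nfl_spec x : 0 <= x -> INR (nfl x) <= x < INR (nfl x) + 1.
Proof.
  intros Hx. unfold nfl, floor. destruct (floor_ex x) as [z Hz]. simpl.
  assert (0 <= z)%Z.
  { assert (-1 < z)%Z. { apply lt_IZR. simpl. lra. } lia. }
  rewrite INR_IZR_INZ, Z2Nat.id by lia. lra.
Qed.
Lemma nfl_unique x n : INR n <= x < INR n + 1 -> nfl x = n.
Proof.
  intros Hn. assert (Hx : 0 <= x) by (pose proof (pos_INR n); lra).
  pose proof (nfl_spec x Hx) as Hm.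
  destruct (Nat.lt_trichotomy (nfl x) n) as [H|[H|H]]; auto.
  - exfalso.
    assert (INR (S (nfl x)) <= INR n) by (apply le_INR; lia).
    rewrite S_INR in *. lra.
  - exfalso. assert (INR (S n) <= INR (nfl x)) by (apply le_INR; lia). rewrite S_INR in *. lra.
Qed.

Definition hN (N : nat) : R := (/ 2) ^ N.
Definition mN (N : nat) (t : R) : nat := nfl (t * 2 ^ N).

Lemma hN_pos N : 0 < hN N.
Proof. unfold hN. apply pow_lt. lra. Qed.

Lemma hN_S N : hN (S N) = hN N / 2.
Proof. unfold hN. simpl. field. Qed.

Lemma hN_2N N : hN N * 2 ^ N = 1.
Proof. unfold hN. rewrite <- Rpow_mult_distr. replace (/2 * 2) with 1 by field. apply pow1. Qed.

Lemma mN_bound N t : 0 <= t -> INR (mN N t) * hN N <= t.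
Proof.
  intros Ht. unfold mN. assert (H2 : 0 < 2 ^ N) by (apply pow_lt; lra).
  destruct (nfl_spec (t * 2 ^ N)) as [H1 _]. { apply Rmult_le_pos; lra. }
  assert (Hh := hN_pos N).
  apply Rle_trans with (t * 2 ^ N * hN N). apply Rmult_le_compat_r; lra.
  rewrite Rmult_assoc, (Rmult_comm (2 ^ N)), hN_2N. lra.
Qed.

Lemma mN_0 N : mN N 0 = O.
Proof. unfold mN. apply nfl_unique. simpl. lra. Qed.

Lemma mN_S N t : 0 <= t -> mN (S N) t = (2 * mN N t)%nat \/ mN (S N) t = S (2 * mN N t).
Proof.
  intros Ht. unfold mN. assert (H2 : 0 < 2 ^ N) by (apply pow_lt; lra).
  destruct (nfl_spec (t * 2 ^ N)) as [H1 H3]. { apply Rmult_le_pos; lra. }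
  set (m := nfl (t * 2 ^ N)) in *.
  replace (t * 2 ^ S N) with (2 * (t * 2 ^ N)) by (simpl; ring).
  destruct (Rlt_dec (2 * (t * 2 ^ N)) (INR (2 * m) + 1)).
  - left. apply nfl_unique. rewrite mult_INR in *. replace (INR 2) with 2 in * by (simpl; ring). lra.
  - right. apply nfl_unique. rewrite S_INR. rewrite mult_INR in *. replace (INR 2) with 2 in * by (simpl; ring). lra.
Qed.

Lemma mN_add N s t : 0 <= s -> 0 <= t ->
  mN N (s + t) = (mN N s + mN N t)%nat \/ mN N (s + t) = S (mN N s + mN N t).
Proof.
  intros Hs Ht. unfold mN. assert (H2 : 0 < 2 ^ N) by (apply pow_lt; lra).
  destruct (nfl_spec (s * 2 ^ N)) as [H1 H3]. { apply Rmult_le_pos; lra. }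
  destruct (nfl_spec (t * 2 ^ N)) as [H4 H5]. { apply Rmult_le_pos; lra. }
  set (a := nfl (s * 2 ^ N)) in *. set (b := nfl (t * 2 ^ N)) in *.
  destruct (Rlt_dec ((s + t) * 2 ^ N) (INR (a + b) + 1)).
  - left. apply nfl_unique. rewrite plus_INR in *. split; [nra|]. lra.
  - right. apply nfl_unique. rewrite S_INR, plus_INR in *. lra.
Qed.

Lemma hN_small eps : 0 < eps -> exists N0, forall N, (N0 <= N)%nat -> hN N < eps.
Proof.
  intros He. destruct (pow_lt_1_zero (/2) ltac:(rewrite Rabs_pos_eq; lra) eps He) as [N0 HN].
  exists N0. intros N HN'. specialize (HN N HN'). rewrite Rabs_pos_eq in HN; auto.
  left; apply hN_pos.
Qed.

Lemma seq_lim (u : nat -> R) :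
  (forall eps, 0 < eps -> exists N0, forall N n, (N0 <= N)%nat -> Rabs (u N - u (N + n)%nat) <= eps) ->
  forall eps, 0 < eps -> exists N0, forall N, (N0 <= N)%nat -> Rabs (u N - real (Lim_seq u)) <= eps.
Proof.
  intros HC.
  assert (Hex : ex_finite_lim_seq u).
  { apply ex_lim_seq_cauchy_corr. intros eps.
    destruct (HC (eps / 3)) as [N0 HN0]. { assert (0 < eps) by apply cond_pos. lra. }
    exists N0. intros n m Hn Hm. assert (0 < eps) by apply cond_pos.
    assert (H1 := HN0 N0 (n - N0)%nat (le_n _)).
    assert (H2 := HN0 N0 (m - N0)%nat (le_n _)).
    replace (N0 + (n - N0))%nat with n in H1 by lia.
    replace (N0 + (m - N0))%nat with m in H2 by lia.
    apply abs_bounds in H1. apply abs_bounds in H2. apply Rabs_def1; lra. }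
  destruct Hex as [l Hl].
  rewrite (is_lim_seq_unique u l Hl). simpl.
  apply is_lim_seq_spec in Hl.
  intros eps He. destruct (HC (eps / 2)) as [N0 HN0]; [lra|].
  exists N0. intros N HN.
  apply le_eps_le. intros e He'. 
  destruct (Hl (mkposreal e He')) as [N1 HN1].
  assert (H1 := HN0 N (N1)%nat HN).
  assert (H2 := HN1 (N + N1)%nat ltac:(lia)). simpl in H2.
  apply abs_bounds in H1. apply Rabs_le. apply Rabs_def2 in H2. lra.
Qed.

Section Abstract.
Variable r : R.
Variable A : (Vpt -> R) -> (Vpt -> R) -> Prop.
Hypothesis HH : AHyp r A.

Let Hr : 0 < r < 1 := ah_r r A HH.
Let Hr1 : r <= 1. Proof. pose proof Hr; lra. Qed.

Lemma AC1 f h : A f h -> inC r f. Proof. intros H; apply (ah_C r A HH f h H). Qed.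
Lemma AC2 f h : A f h -> inC r h. Proof. intros H; apply (ah_C r A HH f h H). Qed.

Lemma A_scal f h a : A f h -> A (fun p => a * f p) (fun p => a * h p).
Proof.
  intros H. eapply (ah_ext r A HH); [apply (ah_lin r A HH f h f h a 0 H H)| |];
  intros p _; ring.
Qed.

Lemma A_plus f h g k : A f h -> A g k -> A (fun p => f p + g p) (fun p => h p + k p).
Proof.
  intros H1 H2. eapply (ah_ext r A HH); [apply (ah_lin r A HH f h g k 1 1 H1 H2)| |];
  intros p _; ring.
Qed.

Lemma A_const c : A (fun _ => c) (fun _ => 0).
Proof.
  eapply (ah_ext r A HH); [apply (A_scal _ _ c (ah_1 r A HH))| |]; intros p _; ring.
Qed.

Lemma A_zero_unique eta u h : 0 < eta -> A u h -> (forall p, inV r p -> u p = eta * h p) ->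
  eqV r u (fun _ => 0).
Proof.
  intros He HA Hu.
  destruct (max_V r u Hr1 (AC1 _ _ HA)) as [p [Hp Hmax]].
  assert (H1 := ah_max r A HH u h p HA Hp Hmax).
  assert (Hneg : A (fun q => -1 * u q) (fun q => -1 * h q)) by (apply A_scal; auto).
  destruct (min_V r u Hr1 (AC1 _ _ HA)) as [q [Hq Hmin]].
  assert (H2 := ah_max r A HH _ _ q Hneg Hq ltac:(intros s Hs; specialize (Hmin s Hs); lra)).
  intros s Hs. specialize (Hmax s Hs). specialize (Hmin s Hs).
  assert (E1 := Hu p Hp). assert (E2 := Hu q Hq).
  assert (eta * h p <= 0) by (apply Rmult_le_0_l; lra).
  assert (0 <= eta * h q) by (apply Rmult_le_pos; lra).
  lra.
Qed.

Definition Rs (eta : R) (g : Vpt -> R) : Vpt -> R :=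
  epsilon (inhabits g) (fun u => exists h, A u h /\ forall p, inV r p -> u p - eta * h p = g p).

Lemma Rs_spec eta g : 0 < eta -> inC r g ->
  exists h, A (Rs eta g) h /\ forall p, inV r p -> Rs eta g p - eta * h p = g p.
Proof.
  intros He Hg. unfold Rs. apply epsilon_spec.
  destruct (ah_res r A HH eta He g Hg) as [u [h [H1 H2]]]. exists u, h; auto.
Qed.

Lemma Rs_C eta g : 0 < eta -> inC r g -> inC r (Rs eta g).
Proof. intros He Hg. destruct (Rs_spec eta g He Hg) as [h [H1 _]]. eapply AC1; eauto. Qed.

Lemma Rs_unique eta g u h : 0 < eta -> inC r g -> A u h ->
  (forall p, inV r p -> u p - eta * h p = g p) -> eqV r (Rs eta g) u.
Proof.
  intros He Hg HA Hu. destruct (Rs_spec eta g He Hg) as [k [Hk1 Hk2]].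
  assert (HA2 := ah_lin r A HH _ _ _ _ 1 (-1) Hk1 HA).
  assert (Z := A_zero_unique eta _ _ He HA2).
  intros p Hp. assert (Z' := Z ltac:(intros q Hq; specialize (Hk2 q Hq); specialize (Hu q Hq); simpl; lra) p Hp).
  simpl in Z'. lra.
Qed.

Lemma Rs_ext eta g g' : 0 < eta -> inC r g -> eqV r g g' -> eqV r (Rs eta g) (Rs eta g').
Proof.
  intros He Hg Heq. assert (Hg' : inC r g') by (eapply inC_ext; eauto).
  destruct (Rs_spec eta g He Hg) as [k [Hk1 Hk2]].
  intros p Hp. symmetry. apply (Rs_unique eta g' (Rs eta g) k He Hg' Hk1); auto.
  intros q Hq. rewrite Hk2; auto.
Qed.

Lemma Rs_lin eta f g a b : 0 < eta -> inC r f -> inC r g ->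
  eqV r (Rs eta (fun p => a * f p + b * g p)) (fun p => a * Rs eta f p + b * Rs eta g p).
Proof.
  intros He Hf Hg.
  destruct (Rs_spec eta f He Hf) as [k [Hk1 Hk2]].
  destruct (Rs_spec eta g He Hg) as [l [Hl1 Hl2]].
  apply (Rs_unique _ _ _ _ He (inC_lin r f g a b Hf Hg) (ah_lin r A HH _ _ _ _ a b Hk1 Hl1)).
  intros p Hp. rewrite <- Hk2, <- Hl2 by auto. ring.
Qed.

Lemma Rs_const eta c : 0 < eta -> eqV r (Rs eta (fun _ => c)) (fun _ => c).
Proof.
  intros He. apply (Rs_unique _ _ _ _ He (inC_const r c) (A_const c)). intros; ring.
Qed.

Lemma Rs_pos eta g : 0 < eta -> inC r g -> (forall p, inV r p -> 0 <= g p) ->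
  forall p, inV r p -> 0 <= Rs eta g p.
Proof.
  intros He Hg Hpos.
  destruct (Rs_spec eta g He Hg) as [k [Hk1 Hk2]].
  destruct (min_V r (Rs eta g) Hr1 (AC1 _ _ Hk1)) as [q [Hq Hmin]].
  assert (Hneg : A (fun s => -1 * Rs eta g s) (fun s => -1 * k s)) by (apply A_scal; auto).
  assert (H2 := ah_max r A HH _ _ q Hneg Hq ltac:(intros s Hs; specialize (Hmin s Hs); lra)).
  intros p Hp. specialize (Hmin p Hp). specialize (Hk2 q Hq). specialize (Hpos q Hq).
  assert (0 <= eta * k q) by (apply Rmult_le_pos; lra). lra.
Qed.

Lemma Rs_mono eta g g' : 0 < eta -> inC r g -> inC r g' -> (forall p, inV r p -> g p <= g' p) ->
  forall p, inV r p -> Rs eta g p <= Rs eta g' p.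
Proof.
  intros He Hg Hg' Hle p Hp.
  assert (H := Rs_pos eta (fun q => 1 * g' q + (-1) * g q) He (inC_lin r _ _ _ _ Hg' Hg)
    ltac:(intros q Hq; specialize (Hle q Hq); lra) p Hp).
  rewrite (Rs_lin eta g' g 1 (-1) He Hg' Hg p Hp) in H. lra.
Qed.

Lemma Rs_contr eta g M : 0 < eta -> inC r g -> bnd r g M -> bnd r (Rs eta g) M.
Proof.
  intros He Hg Hb p Hp.
  assert (H1 := Rs_mono eta g (fun _ => M) He Hg (inC_const r M)
     ltac:(intros q Hq; specialize (Hb q Hq); unfold Rabs in Hb; destruct Rcase_abs; lra) p Hp).
  assert (H2 := Rs_mono eta (fun _ => -M) g He (inC_const r (-M)) Hg
     ltac:(intros q Hq; specialize (Hb q Hq); unfold Rabs in Hb; destruct Rcase_abs; lra) p Hp).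
  rewrite (Rs_const eta M He p Hp) in H1. rewrite (Rs_const eta (-M) He p Hp) in H2.
  unfold Rabs; destruct Rcase_abs; lra.
Qed.

Lemma Rs_diff eta g g' M : 0 < eta -> inC r g -> inC r g' ->
  (forall p, inV r p -> Rabs (g p - g' p) <= M) ->
  forall p, inV r p -> Rabs (Rs eta g p - Rs eta g' p) <= M.
Proof.
  intros He Hg Hg' Hb p Hp.
  assert (H := Rs_contr eta _ M He (inC_lin r _ _ 1 (-1) Hg Hg')
    ltac:(intros q Hq; specialize (Hb q Hq); replace (1 * g q + -1 * g' q) with (g q - g' q) by ring; auto) p Hp).
  rewrite (Rs_lin eta g g' 1 (-1) He Hg Hg' p Hp) in H.
  replace (Rs eta g p - Rs eta g' p) with (1 * Rs eta g p + -1 * Rs eta g' p) by ring. auto.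
Qed.

Lemma Rs_A eta f k : 0 < eta -> A f k -> eqV r (Rs eta f) (fun p => f p + eta * Rs eta k p).
Proof.
  intros He HA.
  destruct (Rs_spec eta k He (AC2 _ _ HA)) as [l [Hl1 Hl2]].
  apply (Rs_unique eta f _ (fun p => k p + eta * l p) He (AC1 _ _ HA)).
  - apply (ah_lin r A HH _ _ _ _ 1 eta HA Hl1) ||
    (eapply (ah_ext r A HH); [apply (ah_lin r A HH _ _ _ _ 1 eta HA Hl1)| |]; intros p _; ring).
  - intros p Hp. specialize (Hl2 p Hp). 
    replace (f p + eta * Rs eta k p - eta * (k p + eta * l p)) with
       (f p - eta * k p + eta * (Rs eta k p - eta * l p)) by ring.
    rewrite Hl2. ring.
Qed.

Lemma Rs_D eta g : 0 < eta -> inC r g ->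
  A (Rs eta g) (fun p => (Rs eta g p - g p) / eta).
Proof.
  intros He Hg. destruct (Rs_spec eta g He Hg) as [k [Hk1 Hk2]].
  eapply (ah_ext r A HH); [exact Hk1| intros p _; reflexivity|].
  intros p Hp. rewrite <- (Hk2 p Hp). field. lra.
Qed.


Lemma Rs_RR eta mu g : 0 < eta -> 0 < mu -> eta <> mu -> inC r g ->
  eqV r (Rs eta (Rs mu g)) (fun p => (mu * Rs mu g p - eta * Rs eta g p) / (mu - eta)).
Proof.
  intros He Hm Hne Hg.
  assert (Hu := Rs_D mu g Hm Hg).
  assert (HuC := Rs_C mu g Hm Hg).
  intros p Hp.
  assert (E : eqV r (fun p => (Rs mu g p - g p) / mu) (fun p => (/mu) * Rs mu g p + (- / mu) * g p)).
  { intros q _. field. lra. }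
  assert (E2 : Rs eta (Rs mu g) p = Rs mu g p + eta * Rs eta (fun q => (Rs mu g q - g q) / mu) p)
    by (apply (Rs_A eta _ _ He Hu p Hp)).
  rewrite (Rs_ext eta _ _ He (AC2 _ _ Hu) E p Hp) in E2.
  rewrite (Rs_lin eta _ _ _ _ He HuC Hg p Hp) in E2.
  set (X := Rs eta (Rs mu g) p) in *. set (Y := Rs eta g p) in *. set (U := Rs mu g p) in *.
  assert (Hd : mu - eta <> 0) by lra.
  assert (E3 : X * (mu - eta) = mu * U - eta * Y).
  { replace U with (X - eta * (/ mu * X + - / mu * Y)) by lra. field. lra. }
  apply (Rmult_eq_reg_r (mu - eta)); auto.
  rewrite E3. field. auto.
Qed.

Lemma Rs_comm eta mu g : 0 < eta -> 0 < mu -> inC r g ->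
  eqV r (Rs eta (Rs mu g)) (Rs mu (Rs eta g)).
Proof.
  intros He Hm Hg. destruct (Req_dec eta mu) as [<-|Hne].
  { intros p _; reflexivity. }
  intros p Hp. rewrite (Rs_RR eta mu g He Hm Hne Hg p Hp).
  rewrite (Rs_RR mu eta g Hm He (not_eq_sym Hne) Hg p Hp).
  field. lra.
Qed.

Fixpoint itR (eta : R) (n : nat) (g : Vpt -> R) : Vpt -> R :=
  match n with O => g | S n => Rs eta (itR eta n g) end.

Lemma itR_C eta n g : 0 < eta -> inC r g -> inC r (itR eta n g).
Proof. intros He Hg; induction n; simpl; auto. apply Rs_C; auto. Qed.

Lemma itR_ext eta n g g' : 0 < eta -> inC r g -> eqV r g g' -> eqV r (itR eta n g) (itR eta n g').
Proof.
  intros He Hg Heq; induction n; simpl; auto.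
  apply Rs_ext; auto. apply itR_C; auto.
Qed.

Lemma itR_lin eta n f g a b : 0 < eta -> inC r f -> inC r g ->
  eqV r (itR eta n (fun p => a * f p + b * g p)) (fun p => a * itR eta n f p + b * itR eta n g p).
Proof.
  intros He Hf Hg; induction n; simpl.
  - intros p _; reflexivity.
  - intros p Hp. rewrite (Rs_ext eta _ _ He (itR_C eta n _ He (inC_lin r f g a b Hf Hg)) IHn p Hp).
    apply Rs_lin; auto; apply itR_C; auto.
Qed.

Lemma itR_const eta n c : 0 < eta -> eqV r (itR eta n (fun _ => c)) (fun _ => c).
Proof.
  intros He; induction n; simpl.
  - intros p _; reflexivity.
  - intros p Hp. rewrite (Rs_ext eta _ _ He (itR_C eta n _ He (inC_const r c)) IHn p Hp).
    apply Rs_const; auto.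
Qed.

Lemma itR_pos eta n g : 0 < eta -> inC r g -> (forall p, inV r p -> 0 <= g p) ->
  forall p, inV r p -> 0 <= itR eta n g p.
Proof.
  intros He Hg Hpos; induction n; simpl; auto.
  apply Rs_pos; auto. apply itR_C; auto.
Qed.

Lemma itR_diff eta n g g' M : 0 < eta -> inC r g -> inC r g' ->
  (forall p, inV r p -> Rabs (g p - g' p) <= M) ->
  forall p, inV r p -> Rabs (itR eta n g p - itR eta n g' p) <= M.
Proof.
  intros He Hg Hg' Hb; induction n; simpl; auto.
  apply Rs_diff; auto; apply itR_C; auto.
Qed.

Lemma itR_add eta a b g : itR eta (a + b) g = itR eta a (itR eta b g).
Proof. induction a; simpl; auto. rewrite IHa; auto. Qed.

Lemma itR_comm eta mu n g : 0 < eta -> 0 < mu -> inC r g ->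
  eqV r (Rs mu (itR eta n g)) (itR eta n (Rs mu g)).
Proof.
  intros He Hm Hg; induction n; simpl.
  - intros p _; reflexivity.
  - intros p Hp. rewrite (Rs_comm mu eta _ Hm He (itR_C eta n g He Hg) p Hp).
    apply Rs_ext; auto. apply Rs_C; auto. apply itR_C; auto.
Qed.

Lemma itR_Rs_diff eta n g M : 0 < eta -> inC r g ->
  (forall p, inV r p -> Rabs (Rs eta g p - g p) <= M) ->
  forall p, inV r p -> Rabs (itR eta (S n) g p - itR eta n g p) <= M.
Proof.
  intros He Hg Hb p Hp. simpl.
  rewrite (itR_comm eta eta n g He He Hg p Hp).
  apply itR_diff; auto. apply Rs_C; auto.
Qed.

Lemma itR_A eta n f k M : 0 < eta -> A f k -> bnd r k M ->
  forall p, inV r p -> Rabs (itR eta n f p - f p) <= INR n * eta * M.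
Proof.
  intros He HA Hb.
  assert (Hstep : forall p, inV r p -> Rabs (Rs eta f p - f p) <= eta * M).
  { intros p Hp. rewrite (Rs_A eta f k He HA p Hp).
    replace (f p + eta * Rs eta k p - f p) with (eta * Rs eta k p) by ring.
    rewrite Rabs_mult, Rabs_pos_eq by lra. apply Rmult_le_compat_l; [lra|].
    apply Rs_contr; auto. eapply AC2; eauto. }
  induction n; intros p Hp.
  - simpl. replace (f p - f p) with 0 by ring. rewrite Rabs_R0.
    assert (0 <= M) by (specialize (Hb p Hp); pose proof (Rabs_pos (k p)); lra). nra.
  - assert (H1 := itR_Rs_diff eta n f (eta * M) He (AC1 _ _ HA) Hstep p Hp).
    specialize (IHn p Hp). rewrite S_INR.
    replace (itR eta (S n) f p - f p) with ((itR eta (S n) f p - itR eta n f p) + (itR eta n f p - f p)) by ring.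
    eapply Rle_trans; [apply Rabs_triang|]. lra.
Qed.


Lemma inC_add1 F f c : inC r F -> inC r f -> inC r (fun p => F p + c * f p).
Proof.
  intros H1 H2. eapply inC_ext; [|apply (inC_lin r F f 1 c H1 H2)]. intros p _; ring.
Qed.

Lemma Rs_add1 eta F f c : 0 < eta -> inC r F -> inC r f ->
  eqV r (Rs eta (fun p => F p + c * f p)) (fun p => Rs eta F p + c * Rs eta f p).
Proof.
  intros He H1 H2 p Hp.
  rewrite (Rs_ext eta (fun p => F p + c * f p) (fun p => 1 * F p + c * f p) He (inC_add1 F f c H1 H2)
    ltac:(intros q _; ring) p Hp).
  rewrite (Rs_lin eta F f 1 c He H1 H2 p Hp). ring.
Qed.

Lemma Rs_comb eta c0 a1 a2 a3 a4 f1 f2 f3 f4 : 0 < eta ->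
  inC r f1 -> inC r f2 -> inC r f3 -> inC r f4 ->
  forall p, inV r p ->
  Rs eta (fun q => c0 + a1 * f1 q + a2 * f2 q + a3 * f3 q + a4 * f4 q) p =
  c0 + a1 * Rs eta f1 p + a2 * Rs eta f2 p + a3 * Rs eta f3 p + a4 * Rs eta f4 p.
Proof.
  intros He H1 H2 H3 H4 p Hp.
  assert (C0 := inC_const r c0).
  assert (C1 := inC_add1 _ _ a1 C0 H1).
  assert (C2 := inC_add1 _ _ a2 C1 H2).
  assert (C3 := inC_add1 _ _ a3 C2 H3).
  rewrite (Rs_add1 eta _ f4 a4 He C3 H4 p Hp).
  rewrite (Rs_add1 eta _ f3 a3 He C2 H3 p Hp).
  rewrite (Rs_add1 eta _ f2 a2 He C1 H2 p Hp).
  rewrite (Rs_add1 eta _ f1 a1 He C0 H1 p Hp).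
  rewrite (Rs_const eta c0 He p Hp). reflexivity.
Qed.

Lemma e1_C : inC r (e1 r).
Proof.
  unfold inC, e1. eapply cont_on_I_ext; [|apply (cont_on_I_mult r (fun x => x - r) (fun x => x - r))].
  - intros x _. simpl. ring.
  - eapply cont_on_I_ext; [|apply (cont_on_I_lin r (fun x => x) (fun _ => r) 1 (-1))].
    intros x _; cbv beta; ring. apply cont_on_I_id. apply cont_on_I_const.
  - eapply cont_on_I_ext; [|apply (cont_on_I_lin r (fun x => x) (fun _ => r) 1 (-1))].
    intros x _; cbv beta; ring. apply cont_on_I_id. apply cont_on_I_const.
Qed.

Lemma e2_C : inC r (e2 r).
Proof.
  pose proof e1_C as H. unfold inC, e1, e2 in *.
  eapply cont_on_I_ext; [|apply (cont_on_I_mult r _ _ H H)].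
  intros x _. simpl. ring.
Qed.

Lemma eI_C : inC r eI.
Proof. unfold inC, eI. apply (cont_on_I_const r 0). Qed.

Lemma closD_conv e : inC r e -> closD r A e ->
  forall eps, 0 < eps -> exists eta0, 0 < eta0 /\ forall eta, 0 < eta < eta0 ->
    forall p, inV r p -> Rabs (Rs eta e p - e p) <= eps.
Proof.
  intros He Hcl eps Heps.
  destruct (Hcl (eps / 3)) as [f [k [HA Hf]]]; [lra|].
  destruct (bnd_exists r k Hr1 (AC2 _ _ HA)) as [Mk [HMk Hbk]].
  exists (eps / 3 / (Mk + 1)). split. { apply Rdiv_lt_0_compat; lra. }
  intros eta [Heta Heta2] p Hp.
  assert (H1 : Rabs (Rs eta e p - Rs eta f p) <= eps / 3).
  { apply Rs_diff; auto. eapply AC1; eauto. intros q Hq. rewrite Rabs_minus_sym. auto. }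
  assert (H2 : Rabs (Rs eta f p - f p) <= eps / 3).
  { rewrite (Rs_A eta f k Heta HA p Hp).
    replace (f p + eta * Rs eta k p - f p) with (eta * Rs eta k p) by ring.
    rewrite Rabs_mult, (Rabs_pos_eq eta) by lra.
    assert (Hc := Rs_contr eta k Mk Heta (AC2 _ _ HA) Hbk p Hp).
    apply Rle_trans with (eta * Mk). apply Rmult_le_compat_l; lra.
    apply Rle_trans with (eps / 3 / (Mk + 1) * (Mk + 1)).
    - rewrite Rmult_plus_distr_l, Rmult_1_r.
      assert (0 <= eta) by lra.
      assert (eta * Mk <= eps / 3 / (Mk + 1) * Mk) by (apply Rmult_le_compat_r; lra).
      assert (0 < eps / 3 / (Mk + 1)) by (apply Rdiv_lt_0_compat; lra). lra.
    - right. field. lra. }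
  assert (H3 := Hf p Hp).
  replace (Rs eta e p - e p) with ((Rs eta e p - Rs eta f p) + (Rs eta f p - f p) + (f p - e p)) by ring.
  eapply Rle_trans; [apply Rabs_triang|].
  eapply Rle_trans; [apply Rplus_le_compat_r; apply Rabs_triang|]. lra.
Qed.


Lemma korovkin_aux g c0 a1 a2 a3 a4 eta p0 : 0 < eta -> inC r g -> inV r p0 ->
  (forall p, inV r p -> 0 <= c0 + a1 * e2 r p + a2 * e1 r p + a3 * eI p + a4 * g p) ->
  0 <= c0 + a1 * Rs eta (e2 r) p0 + a2 * Rs eta (e1 r) p0 + a3 * Rs eta eI p0 + a4 * Rs eta g p0.
Proof.
  intros He Hg Hp0 Hpos.
  rewrite <- (Rs_comb eta c0 a1 a2 a3 a4 (e2 r) (e1 r) eI g He e2_C e1_C eI_C Hg p0 Hp0).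
  apply Rs_pos; auto.
  apply inC_add1; [|auto]. apply inC_add1; [|apply eI_C]. apply inC_add1; [|apply e1_C].
  apply inC_add1; [|apply e2_C]. apply inC_const.
Qed.

Lemma korovkin g : inC r g -> forall eps, 0 < eps -> exists eta0, 0 < eta0 /\
  forall eta, 0 < eta < eta0 -> forall p, inV r p -> Rabs (Rs eta g p - g p) <= eps.
Proof.
  intros Hg eps He.
  destruct (bnd_exists r g Hr1 Hg) as [M [HM Hb]].
  destruct (unif_cont r g Hr1 Hg (eps / 2)) as [d0 [Hd0 Huc]]; [lra|].
  set (d := Rmin d0 1).
  assert (Hd : 0 < d) by (apply Rmin_pos; lra).
  assert (Hd1 : d <= 1) by apply Rmin_r.
  assert (Hdd0 : d <= d0) by apply Rmin_l.
  set (d4 := d ^ 4).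
  assert (Hd4 : 0 < d4) by (apply pow_lt; auto).
  assert (Hd41 : d4 <= 1).
  { unfold d4. replace 1 with (1 ^ 4) by ring. apply pow_incr; lra. }
  assert (HMd : 0 <= 2 * M / d4) by (apply Rmult_le_pos; [lra| left; apply Rinv_0_lt_compat; lra]).
  set (K := 2 * M / d4 + 1).
  assert (HK1 : 1 <= K) by (unfold K; lra).
  assert (HK2e : K * d4 = 2 * M + d4) by (unfold K; field; lra).
  assert (HK2 : K * d4 >= 2 * M) by lra.
  assert (HKM : 2 * M <= K).
  { unfold K. assert (2 * M <= 2 * M / d4).
    { assert (0 <= 2 * M / d4) by (apply Rmult_le_pos; [lra| left; apply Rinv_0_lt_compat; lra]).
      replace (2 * M) with (2 * M / d4 * d4) at 1 by (field; lra).
      replace (2 * M / d4) with (2 * M / d4 * 1) at 2 by ring.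
      apply Rmult_le_compat_l; lra. } lra. }
  assert (HK : 0 < K) by lra.
  set (tau := eps / (8 * K)).
  assert (Htau : 0 < tau) by (apply Rdiv_lt_0_compat; lra).
  assert (HKtau : K * tau = eps / 8) by (unfold tau; field; lra).
  destruct (closD_conv (e1 r) e1_C (ah_t1 r A HH) tau Htau) as [n1 [Hn1 D1]].
  destruct (closD_conv (e2 r) e2_C (ah_t2 r A HH) tau Htau) as [n2 [Hn2 D2]].
  destruct (closD_conv eI eI_C (ah_tI r A HH) tau Htau) as [n3 [Hn3 D3]].
  exists (Rmin n1 (Rmin n2 n3)). split.
  { apply Rmin_pos; auto. apply Rmin_pos; auto. }
  intros eta [Heta Heta2] p0 Hp0.
  assert (Hm1 := Rmin_l n1 (Rmin n2 n3)).
  assert (Hm2 := Rmin_r n1 (Rmin n2 n3)).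
  assert (Hm3 := Rmin_l n2 n3). assert (Hm4 := Rmin_r n2 n3).
  specialize (D1 eta ltac:(lra) p0 Hp0).
  specialize (D2 eta ltac:(lra) p0 Hp0).
  specialize (D3 eta ltac:(lra) p0 Hp0).
  assert (Hgb : forall p q, inV r p -> inV r q -> Rabs (g p - g q) <= 2 * M).
  { intros p q Hp Hq. assert (Hb1 := Hb p Hp). assert (Hb2 := Hb q Hq).
    revert Hb1 Hb2. generalize (g p) (g q). intros a b. unfold Rabs; repeat destruct Rcase_abs; lra. }
  destruct p0 as [x0|].
  - simpl in Hp0. set (s := x0 - r).
    assert (Hs0 : 0 <= s) by (unfold s, Iv in *; lra).
    assert (Hs1 : s <= 1) by (unfold s, Iv in *; lra).
    assert (Hclaim : forall p, inV r p -> Rabs (g p - g (VL x0)) <=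
        eps / 2 + K * (e2 r p - 2 * s ^ 2 * e1 r p + s ^ 4 + d4 * eI p)).
    { intros [x|] Hp.
      - simpl. simpl in Hp.
        replace ((x - r) ^ 4 - 2 * s ^ 2 * (x - r) ^ 2 + s ^ 4 + d4 * 0) with
          (((x - r) ^ 2 - s ^ 2) ^ 2) by ring.
        destruct (Rlt_dec (Rabs (x - x0)) d) as [Hlt|Hge].
        + assert (Hu := Huc x x0 Hp Hp0 ltac:(lra)).
          assert (0 <= K * ((x - r) ^ 2 - s ^ 2) ^ 2).
          { apply Rmult_le_pos; [lra|]. apply pow2_ge_0. }
          lra.
        + set (u := x - r). assert (Hu0 : 0 <= u) by (unfold u, Iv in *; lra).
          assert (Hus : d <= Rabs (u - s)).
          { unfold u, s. replace (x - r - (x0 - r)) with (x - x0) by ring. lra. }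
          assert (Hus2 : Rabs (u - s) <= u + s).
          { unfold Rabs; destruct Rcase_abs; lra. }
          assert (A1 : d ^ 2 <= (u - s) ^ 2).
          { rewrite <- (pow2_abs (u - s)). apply pow_incr; lra. }
          assert (A2 : d ^ 2 <= (u + s) ^ 2).
          { apply pow_incr; lra. }
          assert (A3 : d4 <= (u ^ 2 - s ^ 2) ^ 2).
          { unfold d4. replace (d ^ 4) with (d ^ 2 * d ^ 2) by ring.
            replace ((u ^ 2 - s ^ 2) ^ 2) with ((u - s) ^ 2 * (u + s) ^ 2) by ring.
            apply Rmult_le_compat; auto; apply pow2_ge_0. }
          assert (K * d4 <= K * (u ^ 2 - s ^ 2) ^ 2) by (apply Rmult_le_compat_l; lra).
          specialize (Hgb (VL x) (VL x0) Hp Hp0). lra.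
      - simpl. specialize (Hgb VPlus (VL x0) Hp Hp0).
        replace (0 - 2 * s ^ 2 * 0 + s ^ 4 + d4 * 1) with (s ^ 4 + d4) by ring.
        assert (0 <= s ^ 4) by (apply pow_le; auto).
        assert (K * d4 <= K * (s ^ 4 + d4)) by (apply Rmult_le_compat_l; lra). lra. }
    assert (U1 := korovkin_aux g (eps / 2 + K * s ^ 4 + g (VL x0)) K (- 2 * K * s ^ 2) (K * d4) (-1)
       eta (VL x0) Heta Hg Hp0
       ltac:(intros p Hp; specialize (Hclaim p Hp); unfold Rabs in Hclaim; destruct Rcase_abs; nra)).
    assert (U2 := korovkin_aux g (eps / 2 + K * s ^ 4 - g (VL x0)) K (- 2 * K * s ^ 2) (K * d4) 1
       eta (VL x0) Heta Hg Hp0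
       ltac:(intros p Hp; specialize (Hclaim p Hp); unfold Rabs in Hclaim; destruct Rcase_abs; nra)).
    simpl in D1, D2, D3.
    set (a := Rs eta (e2 r) (VL x0) - s ^ 4) in *.
    set (b := Rs eta (e1 r) (VL x0) - s ^ 2) in *.
    set (c := Rs eta eI (VL x0) - 0) in *.
    assert (Ha : Rabs a <= tau) by (unfold a, s; auto).
    assert (Hbb : Rabs b <= tau) by (unfold b, s; auto).
    assert (Hc : Rabs c <= tau) by auto.
    assert (Hs2 : 0 <= s ^ 2 <= 1).
    { split. apply pow2_ge_0. replace 1 with (1 ^ 2) by ring. apply pow_incr; lra. }
    assert (B : Rabs (a - 2 * s ^ 2 * b + d4 * c) <= 4 * tau).
    { apply abs_bounds in Ha. apply abs_bounds in Hbb. apply abs_bounds in Hc.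
      assert (s ^ 2 * b <= tau) by nra. assert (- tau <= s ^ 2 * b) by nra.
      assert (d4 * c <= tau) by nra. assert (- tau <= d4 * c) by nra.
      apply Rabs_le. lra. }
    assert (B2 : Rabs (K * (a - 2 * s ^ 2 * b + d4 * c)) <= eps / 2).
    { rewrite Rabs_mult, (Rabs_pos_eq K) by lra.
      apply Rle_trans with (K * (4 * tau)). apply Rmult_le_compat_l; lra. lra. }
    assert (E1 : Rs eta (e2 r) (VL x0) = a + s ^ 4) by (unfold a; ring).
    assert (E2 : Rs eta (e1 r) (VL x0) = b + s ^ 2) by (unfold b; ring).
    assert (E3 : Rs eta eI (VL x0) = c) by (unfold c; ring).
    rewrite E1, E2, E3 in U1, U2.
    assert (EE : forall z : R, z = K * (a - 2 * s ^ 2 * b + d4 * c) -> Rabs z <= eps / 2).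
    { intros z ->. auto. }
    revert U1 U2 B2. generalize (K * (a - 2 * s ^ 2 * b + d4 * c)). intros z U1' U2' B2'.
    unfold Rabs in *; repeat destruct Rcase_abs; nra.
  - simpl in D3.
    assert (Hclaim : forall p, inV r p -> Rabs (g p - g VPlus) <= eps / 2 + K * (1 - eI p)).
    { intros [x|] Hp; simpl.
      - specialize (Hgb (VL x) VPlus Hp I). lra.
      - replace (g VPlus - g VPlus) with 0 by ring. rewrite Rabs_R0. lra. }
    assert (U1 := korovkin_aux g (eps / 2 + K + g VPlus) 0 0 (- K) (-1)
       eta VPlus Heta Hg I
       ltac:(intros p Hp; specialize (Hclaim p Hp); unfold Rabs in Hclaim; destruct Rcase_abs; nra)).
    assert (U2 := korovkin_aux g (eps / 2 + K - g VPlus) 0 0 (- K) 1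
       eta VPlus Heta Hg I
       ltac:(intros p Hp; specialize (Hclaim p Hp); unfold Rabs in Hclaim; destruct Rcase_abs; nra)).
    set (c := Rs eta eI VPlus - 1) in *.
    assert (E3 : Rs eta eI VPlus = c + 1) by (unfold c; ring).
    rewrite E3 in U1, U2.
    assert (Hc : Rabs (K * c) <= eps / 8).
    { rewrite Rabs_mult, (Rabs_pos_eq K) by lra. rewrite <- HKtau. apply Rmult_le_compat_l; lra. }
    revert U1 U2 Hc. generalize (K * c). intros z U1 U2 Hc'.
    unfold Rabs in *; repeat destruct Rcase_abs; nra.
Qed.


Definition U (N : nat) (t : R) (g : Vpt -> R) : Vpt -> R := itR (hN N) (mN N t) g.

Lemma U_C N t g : inC r g -> inC r (U N t g).
Proof. intros; apply itR_C; auto; apply hN_pos. Qed.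

Lemma bnd_nonneg f M : bnd r f M -> 0 <= M.
Proof. intros H. specialize (H VPlus I). pose proof (Rabs_pos (f VPlus)); lra. Qed.

Lemma step1 h f k l Ml : 0 < h -> A f k -> A k l -> bnd r l Ml ->
  forall p, inV r p -> Rabs (Rs (h / 2) (Rs (h / 2) f) p - Rs h f p) <= 2 * h ^ 2 * Ml.
Proof.
  intros Hh Hf Hk Hl p Hp.
  assert (Hh2 : 0 < h / 2) by lra.
  assert (Cf := AC1 _ _ Hf). assert (Ck := AC1 _ _ Hk). assert (Cl := AC2 _ _ Hk).
  assert (a := Rs_A h f k Hh Hf p Hp).
  assert (b := Rs_A h k l Hh Hk p Hp).
  assert (c := Rs_A (h/2) f k Hh2 Hf).
  assert (d := Rs_A (h/2) k l Hh2 Hk).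
  assert (CSk := Rs_C (h/2) k Hh2 Ck). assert (CSl := Rs_C (h/2) l Hh2 Cl).
  assert (e : Rs (h/2) (Rs (h/2) f) p = Rs (h/2) f p + (h/2) * Rs (h/2) (Rs (h/2) k) p).
  { rewrite (Rs_ext (h/2) _ _ Hh2 (Rs_C _ _ Hh2 Cf) c p Hp).
    apply (Rs_add1 (h/2) f _ (h/2) Hh2 Cf CSk p Hp). }
  assert (e' : Rs (h/2) (Rs (h/2) k) p = Rs (h/2) k p + (h/2) * Rs (h/2) (Rs (h/2) l) p).
  { rewrite (Rs_ext (h/2) _ _ Hh2 (Rs_C _ _ Hh2 Ck) d p Hp).
    apply (Rs_add1 (h/2) k _ (h/2) Hh2 Ck CSl p Hp). }
  rewrite e, e', a, b, (c p Hp), (d p Hp).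
  assert (B1 := Rs_contr h l Ml Hh Cl Hl p Hp).
  assert (B2 := Rs_contr (h/2) l Ml Hh2 Cl Hl p Hp).
  assert (B3 := Rs_contr (h/2) _ Ml Hh2 CSl (Rs_contr (h/2) l Ml Hh2 Cl Hl) p Hp).
  set (x1 := Rs h l p) in *. set (x2 := Rs (h/2) l p) in *. set (x3 := Rs (h/2) (Rs (h/2) l) p) in *.
  replace (f p + h / 2 * (k p + h / 2 * x2) + h / 2 * (k p + h / 2 * x2 + h / 2 * x3) -
     (f p + h * (k p + h * x1))) with (h ^ 2 * (x2 / 2 + x3 / 4 - x1)) by (simpl; field).
  rewrite Rabs_mult, Rabs_pos_eq by (apply pow2_ge_0).
  assert (0 < h ^ 2) by (apply pow_lt; lra).
  assert (Rabs (x2 / 2 + x3 / 4 - x1) <= 2 * Ml).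
  { apply abs_bounds in B1. apply abs_bounds in B2. apply abs_bounds in B3.
    apply Rabs_le. lra. }
  replace (2 * h ^ 2 * Ml) with (h ^ 2 * (2 * Ml)) by ring.
  apply Rmult_le_compat_l; lra.
Qed.

Lemma step2 h f k l Ml : 0 < h -> A f k -> A k l -> bnd r l Ml ->
  forall n p, inV r p -> Rabs (itR h n f p - itR (h / 2) (2 * n) f p) <= INR n * (2 * h ^ 2 * Ml).
Proof.
  intros Hh Hf Hk Hl.
  assert (Hh2 : 0 < h / 2) by lra.
  assert (Cf := AC1 _ _ Hf).
  assert (HMl := bnd_nonneg _ _ Hl).
  induction n; intros p Hp.
  - simpl. replace (f p - f p) with 0 by ring. rewrite Rabs_R0. lra.
  - replace (2 * S n)%nat with (2 + 2 * n)%nat by lia.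
    rewrite itR_add. simpl itR at 1.
    assert (E := itR_comm (h/2) h (2 * n) f Hh2 Hh Cf p Hp).
    assert (C1 := itR_C h n f Hh Cf). assert (C2 := itR_C (h/2) (2*n) f Hh2 Cf).
    assert (H1 : Rabs (Rs h (itR h n f) p - Rs h (itR (h/2) (2*n) f) p) <= INR n * (2 * h ^ 2 * Ml)).
    { apply Rs_diff; auto. }
    assert (H2 : Rabs (itR (h/2) (2*n) (Rs h f) p - itR (h/2) 2 (itR (h/2) (2*n) f) p) <= 2 * h ^ 2 * Ml).
    { rewrite <- itR_add. replace (2 + 2 * n)%nat with (2 * n + 2)%nat by lia. rewrite itR_add.
      rewrite Rabs_minus_sym.
      apply itR_diff; auto. apply itR_C; auto. apply Rs_C; auto.
      intros q Hq. simpl. apply (step1 h f k l Ml Hh Hf Hk Hl q Hq). }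
    rewrite E in H1. rewrite S_INR.
    replace (Rs h (itR h n f) p - itR (h / 2) 2 (itR (h / 2) (2 * n) f) p) with
      ((Rs h (itR h n f) p - itR (h/2) (2*n) (Rs h f) p) + (itR (h/2) (2*n) (Rs h f) p - itR (h / 2) 2 (itR (h / 2) (2 * n) f) p)) by ring.
    eapply Rle_trans; [apply Rabs_triang|]. lra.
Qed.

Lemma step3 N t f k l Mk Ml : 0 <= t -> A f k -> A k l -> bnd r k Mk -> bnd r l Ml ->
  forall p, inV r p -> Rabs (U N t f p - U (S N) t f p) <= hN N * (2 * t * Ml + Mk).
Proof.
  intros Ht Hf Hk Hbk Hbl p Hp. unfold U.
  set (h := hN N). assert (Hh : 0 < h) by apply hN_pos.
  rewrite hN_S. fold h. assert (Hh2 : 0 < h / 2) by lra.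
  assert (HMk := bnd_nonneg _ _ Hbk). assert (HMl := bnd_nonneg _ _ Hbl).
  assert (Hm := mN_bound N t Ht). fold h in Hm.
  assert (S2 := step2 h f k l Ml Hh Hf Hk Hbl (mN N t) p Hp).
  assert (HS2 : INR (mN N t) * (2 * h ^ 2 * Ml) <= h * (2 * t * Ml)).
  { replace (INR (mN N t) * (2 * h ^ 2 * Ml)) with ((INR (mN N t) * h) * (2 * h * Ml)) by ring.
    replace (h * (2 * t * Ml)) with (t * (2 * h * Ml)) by ring.
    apply Rmult_le_compat_r; auto. nra. }
  destruct (mN_S N t Ht) as [E|E]; rewrite E.
  - assert (0 <= h * Mk) by nra. lra.
  - assert (H3 : Rabs (itR (h / 2) (S (2 * mN N t)) f p - itR (h / 2) (2 * mN N t) f p) <= h / 2 * Mk).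
    { apply itR_Rs_diff; auto. eapply AC1; eauto.
      intros q Hq. rewrite (Rs_A (h/2) f k Hh2 Hf q Hq).
      replace (f q + h / 2 * Rs (h / 2) k q - f q) with (h / 2 * Rs (h / 2) k q) by ring.
      rewrite Rabs_mult, (Rabs_pos_eq (h/2)) by lra. apply Rmult_le_compat_l; [lra|].
      apply Rs_contr; auto. eapply AC2; eauto. }
    replace (itR h (mN N t) f p - itR (h / 2) (S (2 * mN N t)) f p) with
      ((itR h (mN N t) f p - itR (h / 2) (2 * mN N t) f p) - (itR (h / 2) (S (2 * mN N t)) f p - itR (h / 2) (2 * mN N t) f p)) by ring.
    apply abs_bounds in S2. apply abs_bounds in H3.
    assert (0 <= h * Mk) by nra. apply Rabs_le. lra.
Qed.

Lemma step4 N t f k l Mk Ml : 0 <= t -> A f k -> A k l -> bnd r k Mk -> bnd r l Ml ->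
  forall n p, inV r p -> Rabs (U N t f p - U (N + n) t f p) <= (2 * hN N - 2 * hN (N + n)) * (2 * t * Ml + Mk).
Proof.
  intros Ht Hf Hk Hbk Hbl. induction n; intros p Hp.
  - rewrite Nat.add_0_r. replace (U N t f p - U N t f p) with 0 by ring. rewrite Rabs_R0. lra.
  - assert (H1 := IHn p Hp). assert (H2 := step3 (N + n) t f k l Mk Ml Ht Hf Hk Hbk Hbl p Hp).
    replace (N + S n)%nat with (S (N + n)) by lia. rewrite hN_S.
    replace (U N t f p - U (S (N + n)) t f p) with
      ((U N t f p - U (N + n) t f p) + (U (N + n) t f p - U (S (N + n)) t f p)) by ring.
    eapply Rle_trans; [apply Rabs_triang|]. 
    replace ((2 * hN N - 2 * (hN (N + n) / 2)) * (2 * t * Ml + Mk)) with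
      ((2 * hN N - 2 * hN (N + n)) * (2 * t * Ml + Mk) + hN (N + n) * (2 * t * Ml + Mk)) by field.
    lra.
Qed.


Lemma D2 eta g : 0 < eta -> inC r g -> exists k l, A (Rs eta (Rs eta g)) k /\ A k l.
Proof.
  intros He Hg.
  assert (Cv := Rs_C eta g He Hg).
  assert (Hv := Rs_D eta g He Hg).
  assert (Hf := Rs_D eta (Rs eta g) He Cv).
  set (kv := fun p => (Rs eta g p - g p) / eta) in *.
  exists (Rs eta kv), (fun p => (Rs eta kv p - kv p) / eta). split.
  - eapply (ah_ext r A HH); [exact Hf| intros p _; reflexivity|].
    intros p Hp. rewrite (Rs_A eta _ _ He Hv p Hp). field. lra.
  - apply Rs_D; auto. eapply AC2; eauto.
Qed.

Lemma Ucauchy g t : inC r g -> 0 <= t -> forall eps, 0 < eps -> exists N0, forall N n p,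
  (N0 <= N)%nat -> inV r p -> Rabs (U N t g p - U (N + n) t g p) <= eps.
Proof.
  intros Hg Ht eps He.
  destruct (korovkin g Hg (eps / 6)) as [e0 [He0 Hk]]; [lra|].
  set (eta := e0 / 2). assert (Heta : 0 < eta < e0) by (unfold eta; lra).
  assert (Hv := Hk eta Heta).
  assert (Cv := Rs_C eta g (proj1 Heta) Hg).
  set (f := Rs eta (Rs eta g)).
  assert (Cf : inC r f) by (apply Rs_C; lra || auto).
  assert (Hfg : forall p, inV r p -> Rabs (f p - g p) <= eps / 3).
  { intros p Hp. unfold f.
    replace (Rs eta (Rs eta g) p - g p) with ((Rs eta (Rs eta g) p - Rs eta g p) + (Rs eta g p - g p)) by ring.
    eapply Rle_trans; [apply Rabs_triang|].
    assert (Rabs (Rs eta (Rs eta g) p - Rs eta g p) <= eps / 6).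
    { apply Rs_diff; auto; lra. }
    specialize (Hv p Hp). lra. }
  destruct (D2 eta g ltac:(lra) Hg) as [k [l [Hfk Hkl]]].
  destruct (bnd_exists r k Hr1 (AC1 _ _ Hkl)) as [Mk [HMk Hbk]].
  destruct (bnd_exists r l Hr1 (AC2 _ _ Hkl)) as [Ml [HMl Hbl]].
  set (c := 2 * t * Ml + Mk).
  assert (Hc : 0 <= c) by (unfold c; nra).
  destruct (hN_small (eps / 6 / (c + 1))) as [N0 HN0]. { apply Rdiv_lt_0_compat; lra. }
  exists N0. intros N n p HN Hp.
  assert (S4 := step4 N t f k l Mk Ml Ht Hfk Hkl Hbk Hbl n p Hp).
  assert (Hh := HN0 N HN).
  assert (Hhp := hN_pos (N + n)).
  assert (Hhc : hN N * c <= eps / 6).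
  { apply Rle_trans with (eps / 6 / (c + 1) * (c + 1)).
    - apply Rle_trans with (hN N * (c + 1)). assert (0 < hN N) by apply hN_pos. nra.
      apply Rmult_le_compat_r; lra.
    - right; field; lra. }
  assert (H1 : Rabs (U N t g p - U N t f p) <= eps / 3).
  { apply itR_diff; auto; try apply hN_pos. intros q Hq. rewrite Rabs_minus_sym. auto. }
  assert (H2 : Rabs (U (N + n) t f p - U (N + n) t g p) <= eps / 3).
  { apply itR_diff; auto; apply hN_pos. }
  replace (U N t g p - U (N + n) t g p) with
    ((U N t g p - U N t f p) + (U N t f p - U (N + n) t f p) + (U (N + n) t f p - U (N + n) t g p)) by ring.
  apply abs_bounds in H1. apply abs_bounds in H2. apply abs_bounds in S4.
  apply Rabs_le.
  assert (0 <= hN (N + n) * c) by nra.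
  assert ((2 * hN N - 2 * hN (N + n)) * c <= eps / 3) by nra.
  unfold c in *. split; lra.
Qed.

Definition T (t : R) (g : Vpt -> R) (p : Vpt) : R := real (Lim_seq (fun N => U N t g p)).

Lemma T_conv g t : inC r g -> 0 <= t -> forall eps, 0 < eps -> exists N0, forall N p,
  (N0 <= N)%nat -> inV r p -> Rabs (U N t g p - T t g p) <= eps.
Proof.
  intros Hg Ht eps He.
  destruct (Ucauchy g t Hg Ht (eps / 2)) as [N0 HN0]; [lra|].
  exists N0. intros N p HN Hp. unfold T.
  assert (Hs := seq_lim (fun N => U N t g p)).
  destruct (Hs ltac:(intros e He'; destruct (Ucauchy g t Hg Ht e He') as [N1 HN1];
                     exists N1; intros; apply HN1; auto) (eps / 2) ltac:(lra)) as [N1 HN1].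
  specialize (HN1 (N + N1)%nat ltac:(lia)).
  specialize (HN0 N N1 p HN Hp).
  apply abs_bounds in HN1. apply abs_bounds in HN0. apply Rabs_le. lra.
Qed.


Lemma mN_upper N t : 0 <= t -> t < (INR (mN N t) + 1) * hN N.
Proof.
  intros Ht. unfold mN. assert (H2 : 0 < 2 ^ N) by (apply pow_lt; lra).
  destruct (nfl_spec (t * 2 ^ N)) as [_ H1]. { apply Rmult_le_pos; lra. }
  assert (Hh := hN_pos N).
  apply Rle_lt_trans with (t * 2 ^ N * hN N).
  - rewrite Rmult_assoc, (Rmult_comm (2 ^ N)), hN_2N. lra.
  - apply Rmult_lt_compat_r; auto.
Qed.

Lemma T_bound g t p c M : inC r g -> 0 <= t -> inV r p ->
  (forall N, Rabs (U N t g p - c) <= M) -> Rabs (T t g p - c) <= M.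
Proof.
  intros Hg Ht Hp HB. apply le_eps_le. intros e He.
  destruct (T_conv g t Hg Ht e He) as [N0 HN0].
  specialize (HN0 N0 p (le_n _) Hp). specialize (HB N0).
  apply abs_bounds in HN0. apply abs_bounds in HB. apply Rabs_le. lra.
Qed.

Lemma T_bound2 f g t p M : inC r f -> inC r g -> 0 <= t -> inV r p ->
  (forall N, Rabs (U N t f p - U N t g p) <= M) -> Rabs (T t f p - T t g p) <= M.
Proof.
  intros Hf Hg Ht Hp HB. apply le_eps_le. intros e He.
  destruct (T_conv f t Hf Ht (e/2)) as [N0 HN0]; [lra|].
  destruct (T_conv g t Hg Ht (e/2)) as [N1 HN1]; [lra|].
  specialize (HN0 (N0 + N1)%nat p ltac:(lia) Hp). specialize (HN1 (N0 + N1)%nat p ltac:(lia) Hp).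
  specialize (HB (N0 + N1)%nat).
  apply abs_bounds in HN0. apply abs_bounds in HN1. apply abs_bounds in HB. apply Rabs_le. lra.
Qed.

Lemma T_C g t : inC r g -> 0 <= t -> inC r (T t g).
Proof.
  intros Hg Ht. apply (unif_limit_C r (fun N => U N t g)).
  - intros n; apply U_C; auto.
  - intros eps He. destruct (T_conv g t Hg Ht eps He) as [N0 HN0]. exists N0. auto.
Qed.

Lemma T_lin t f g a b : 0 <= t -> inC r f -> inC r g -> forall p, inV r p ->
  T t (fun q => a * f q + b * g q) p = a * T t f p + b * T t g p.
Proof.
  intros Ht Hf Hg p Hp. apply le_eps_eq. intros e He.
  set (e' := e / (3 * (Rabs a + Rabs b + 1))).
  assert (He' : 0 < e') by (unfold e'; apply Rdiv_lt_0_compat; [lra|]; pose proof (Rabs_pos a); pose proof (Rabs_pos b); lra).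
  destruct (T_conv f t Hf Ht e' He') as [N0 HN0].
  destruct (T_conv g t Hg Ht e' He') as [N1 HN1].
  destruct (T_conv _ t (inC_lin r f g a b Hf Hg) Ht e' He') as [N2 HN2].
  set (N := (N0 + N1 + N2)%nat).
  specialize (HN0 N p ltac:(unfold N; lia) Hp). specialize (HN1 N p ltac:(unfold N; lia) Hp).
  specialize (HN2 N p ltac:(unfold N; lia) Hp).
  unfold U in HN2. rewrite (itR_lin _ _ f g a b (hN_pos N) Hf Hg p Hp) in HN2. fold (U N t f) (U N t g) in HN2.
  replace (T t (fun q => a * f q + b * g q) p - (a * T t f p + b * T t g p)) with
    (- (a * U N t f p + b * U N t g p - T t (fun q => a * f q + b * g q) p) + a * (U N t f p - T t f p) + b * (U N t g p - T t g p)) by ring.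
  eapply Rle_trans; [apply Rabs_triang|].
  eapply Rle_trans; [apply Rplus_le_compat_r; apply Rabs_triang|].
  rewrite Rabs_Ropp, !Rabs_mult.
  assert (Rabs a * Rabs (U N t f p - T t f p) <= Rabs a * e') by (apply Rmult_le_compat_l; auto; apply Rabs_pos).
  assert (Rabs b * Rabs (U N t g p - T t g p) <= Rabs b * e') by (apply Rmult_le_compat_l; auto; apply Rabs_pos).
  assert (e' + Rabs a * e' + Rabs b * e' <= e).
  { unfold e'. replace (e / (3 * (Rabs a + Rabs b + 1)) + Rabs a * (e / (3 * (Rabs a + Rabs b + 1))) +
      Rabs b * (e / (3 * (Rabs a + Rabs b + 1)))) with (e / 3) by (field; pose proof (Rabs_pos a); pose proof (Rabs_pos b); lra).
    lra. }
  lra.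
Qed.

Lemma T_pos t g : 0 <= t -> inC r g -> (forall p, inV r p -> 0 <= g p) -> forall p, inV r p -> 0 <= T t g p.
Proof.
  intros Ht Hg Hpos p Hp. apply le_eps_le. intros e He.
  destruct (T_conv g t Hg Ht e He) as [N0 HN0]. specialize (HN0 N0 p (le_n _) Hp).
  assert (0 <= U N0 t g p) by (apply itR_pos; auto; apply hN_pos).
  apply abs_bounds in HN0. lra.
Qed.

Lemma T_const t c : 0 <= t -> forall p, inV r p -> T t (fun _ => c) p = c.
Proof.
  intros Ht p Hp. apply le_eps_eq. intros e He.
  rewrite Rabs_minus_sym.
  replace (c - T t (fun _ => c) p) with (U 0 t (fun _ => c) p - T t (fun _ => c) p).
  2: { unfold U. rewrite (itR_const _ _ c (hN_pos 0) p Hp). reflexivity. }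
  apply le_eps_le. intros e' He'.
  destruct (T_conv _ t (inC_const r c) Ht e' He') as [N0 HN0]. specialize (HN0 N0 p (le_n _) Hp).
  unfold U in *. rewrite (itR_const _ _ c (hN_pos N0) p Hp) in HN0.
  rewrite (itR_const _ _ c (hN_pos 0) p Hp). lra.
Qed.

Lemma T_0 g : forall p, inV r p -> T 0 g p = g p.
Proof.
  intros p Hp. unfold T, U. 
  rewrite (Lim_seq_ext _ (fun _ => g p)). rewrite Lim_seq_const. reflexivity.
  intros N. rewrite mN_0. reflexivity.
Qed.

Lemma T_semi s t g : 0 <= s -> 0 <= t -> inC r g -> forall p, inV r p ->
  T (s + t) g p = T s (T t g) p.
Proof.
  intros Hs Ht Hg p Hp. apply le_eps_eq. intros e He.
  assert (HTC := T_C g t Hg Ht).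
  destruct (T_conv g (s + t) Hg ltac:(lra) (e/4)) as [N1 HN1]; [lra|].
  destruct (T_conv g t Hg Ht (e/4)) as [N2 HN2]; [lra|].
  destruct (T_conv (T t g) s HTC Hs (e/4)) as [N3 HN3]; [lra|].
  destruct (korovkin g Hg (e/4)) as [e0 [He0 Hk]]; [lra|].
  destruct (hN_small e0 He0) as [N4 HN4].
  set (N := (N1 + N2 + N3 + N4)%nat).
  specialize (HN1 N p ltac:(unfold N; lia) Hp).
  specialize (HN3 N p ltac:(unfold N; lia) Hp).
  assert (Hh := HN4 N ltac:(unfold N; lia)).
  assert (Hhp := hN_pos N).
  assert (H2 : Rabs (U N s (U N t g) p - U N s (T t g) p) <= e / 4).
  { refine (itR_diff (hN N) (mN N s) (U N t g) (T t g) (e/4) Hhp (U_C N t g Hg) HTC _ p Hp).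
    intros q Hq. apply HN2; auto. unfold N; lia. }
  assert (H4 : Rabs (U N (s + t) g p - U N s (U N t g) p) <= e / 4).
  { unfold U. rewrite <- itR_add.
    destruct (mN_add N s t Hs Ht) as [E|E]; rewrite E.
    - replace (itR (hN N) (mN N s + mN N t) g p - itR (hN N) (mN N s + mN N t) g p) with 0 by ring.
      rewrite Rabs_R0; lra.
    - apply itR_Rs_diff; auto; try (intros q Hq; apply Hk; auto). }
  apply abs_bounds in HN1. apply abs_bounds in HN3. apply abs_bounds in H2. apply abs_bounds in H4.
  apply Rabs_le. lra.
Qed.

Lemma T_strong g : inC r g -> forall eps, 0 < eps -> exists delta, 0 < delta /\
  forall t, 0 <= t < delta -> forall p, inV r p -> Rabs (T t g p - g p) < eps.
Proof.
  intros Hg eps He.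
  destruct (korovkin g Hg (eps/4)) as [e0 [He0 Hk]]; [lra|].
  set (eta := e0 / 2). assert (Heta : 0 < eta < e0) by (unfold eta; lra).
  set (f := Rs eta g).
  assert (Cf : inC r f) by (apply Rs_C; auto; lra).
  assert (HA := Rs_D eta g (proj1 Heta) Hg). fold f in HA.
  destruct (bnd_exists r _ Hr1 (AC2 _ _ HA)) as [Mk [HMk Hbk]].
  exists (eps / 4 / (Mk + 1)). split. { apply Rdiv_lt_0_compat; lra. }
  intros t [Ht Ht2] p Hp.
  assert (H1 : Rabs (T t g p - T t f p) <= eps / 4).
  { apply T_bound2; auto. intros N. apply itR_diff; auto. apply hN_pos.
    intros q Hq. rewrite Rabs_minus_sym. apply Hk; auto. }
  assert (H2 : Rabs (T t f p - f p) <= t * Mk).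
  { apply T_bound; auto. intros N. unfold U.
    eapply Rle_trans. apply (itR_A (hN N) (mN N t) f _ Mk (hN_pos N) HA Hbk p Hp).
    assert (Hm := mN_bound N t Ht). apply Rmult_le_compat_r; auto. }
  assert (H3 : Rabs (f p - g p) <= eps / 4) by (apply Hk; auto).
  assert (H4 : t * Mk < eps / 4).
  { apply Rle_lt_trans with (t * (Mk + 1)). nra.
    apply Rlt_le_trans with (eps / 4 / (Mk + 1) * (Mk + 1)). apply Rmult_lt_compat_r; lra.
    right; field; lra. }
  apply abs_bounds in H1. apply abs_bounds in H2. apply abs_bounds in H3.
  apply Rabs_def1; lra.
Qed.

Lemma itR_gen h f k p B : 0 < h -> A f k -> inV r p ->
  forall n, (forall j, (j < n)%nat -> Rabs (itR h (S j) k p - k p) <= B) ->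
  Rabs (itR h n f p - f p - INR n * h * k p) <= INR n * h * B.
Proof.
  intros Hh HA Hp. assert (Cf := AC1 _ _ HA). assert (Ck := AC2 _ _ HA).
  induction n; intros HB.
  - simpl. replace (f p - f p - 0 * h * k p) with 0 by ring. rewrite Rabs_R0. lra.
  - assert (IH := IHn ltac:(intros j Hj; apply HB; lia)).
    assert (Hj := HB n ltac:(lia)).
    assert (Inc : itR h (S n) f p - itR h n f p = h * itR h (S n) k p).
    { simpl. rewrite (itR_comm h h n f Hh Hh Cf p Hp).
      rewrite (itR_ext h n _ _ Hh (Rs_C _ _ Hh Cf) (Rs_A h f k Hh HA) p Hp).
      assert (EE : eqV r (fun q => f q + h * Rs h k q) (fun q => 1 * f q + h * Rs h k q)).
      { intros q _. ring. }
      rewrite (itR_ext h n _ _ Hh (inC_add1 _ _ _ Cf (Rs_C _ _ Hh Ck)) EE p Hp).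
      rewrite (itR_lin h n _ _ 1 h Hh Cf (Rs_C _ _ Hh Ck) p Hp).
      rewrite <- (itR_comm h h n k Hh Hh Ck p Hp). simpl. ring. }
    rewrite S_INR.
    replace (itR h (S n) f p - f p - (INR n + 1) * h * k p) with
      ((itR h n f p - f p - INR n * h * k p) + h * (itR h (S n) k p - k p)).
    2: { assert (Inc' : itR h (S n) f p = itR h n f p + h * itR h (S n) k p) by lra.
         rewrite Inc'. ring. }
    eapply Rle_trans; [apply Rabs_triang|].
    rewrite Rabs_mult, (Rabs_pos_eq h) by lra.
    assert (h * Rabs (itR h (S n) k p - k p) <= h * B) by (apply Rmult_le_compat_l; lra).
    lra.
Qed.

Lemma gen_fwd f k : A f k -> generator_graph r T f k.
Proof.
  intros HA eps He.
  assert (Cf := AC1 _ _ HA). assert (Ck := AC2 _ _ HA).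
  destruct (korovkin k Ck (eps/8)) as [e0 [He0 Hk]]; [lra|].
  set (eta := e0 / 2). assert (Heta : 0 < eta < e0) by (unfold eta; lra).
  set (k' := Rs eta k).
  assert (Ck' : inC r k') by (apply Rs_C; auto; lra).
  assert (HA' := Rs_D eta k (proj1 Heta) Ck). fold k' in HA'.
  destruct (bnd_exists r _ Hr1 (AC2 _ _ HA')) as [Ml [HMl Hbl]].
  destruct (bnd_exists r _ Hr1 Ck) as [Mk [HMk Hbk]].
  set (B := eps / 4 + eps / 4).
  exists (eps / 4 / (Ml + 1)). split. { apply Rdiv_lt_0_compat; lra. }
  intros t [Ht Ht2] p Hp.
  assert (HtMl : t * Ml < eps / 4).
  { apply Rle_lt_trans with (t * (Ml + 1)). nra.
    apply Rlt_le_trans with (eps / 4 / (Ml + 1) * (Ml + 1)). apply Rmult_lt_compat_r; lra.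
    right; field; lra. }
  assert (Key : Rabs (T t f p - f p - t * k p) <= t * (eps / 4 + t * Ml)).
  { apply le_eps_le. intros e' He'.
    destruct (T_conv f t Cf ltac:(lra) (e'/2)) as [N0 HN0]; [lra|].
    destruct (hN_small (e' / 2 / (Mk + 1))) as [N1 HN1]. { apply Rdiv_lt_0_compat; lra. }
    set (N := (N0 + N1)%nat). specialize (HN0 N p ltac:(unfold N; lia) Hp).
    specialize (HN1 N ltac:(unfold N; lia)).
    set (h := hN N) in *. assert (Hh : 0 < h) by apply hN_pos.
    set (m := mN N t).
    assert (Hm1 : INR m * h <= t) by (apply mN_bound; lra).
    assert (Hm2 : t < (INR m + 1) * h) by (apply mN_upper; lra).
    assert (G := itR_gen h f k p (eps / 4 + t * Ml) Hh HA Hp m).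
    assert (G' : Rabs (itR h m f p - f p - INR m * h * k p) <= INR m * h * (eps / 4 + t * Ml)).
    { apply G. intros j Hj.
      assert (X1 : Rabs (itR h (S j) k p - itR h (S j) k' p) <= eps / 8).
      { apply itR_diff; auto. intros q Hq. rewrite Rabs_minus_sym. apply Hk; auto. }
      assert (X2 : Rabs (itR h (S j) k' p - k' p) <= INR (S j) * h * Ml).
      { apply (itR_A h (S j) k' _ Ml Hh HA' Hbl p Hp). }
      assert (X3 : Rabs (k' p - k p) <= eps / 8) by (apply Hk; auto).
      assert (X4 : INR (S j) * h <= t).
      { apply Rle_trans with (INR m * h); auto. apply Rmult_le_compat_r; [lra|]. apply le_INR. lia. }
      assert (X5 : INR (S j) * h * Ml <= t * Ml) by (apply Rmult_le_compat_r; lra).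
      apply abs_bounds in X1. apply abs_bounds in X2. apply abs_bounds in X3.
      apply Rabs_le. lra. }
    assert (Hkp := Hbk p Hp).
    assert (Hdiff : Rabs ((t - INR m * h) * k p) <= e' / 2).
    { rewrite Rabs_mult. rewrite Rabs_pos_eq by lra.
      apply Rle_trans with (h * Mk). apply Rmult_le_compat; try lra. apply Rabs_pos.
      apply Rle_trans with (h * (Mk + 1)). nra.
      apply Rle_trans with (e' / 2 / (Mk + 1) * (Mk + 1)). apply Rmult_le_compat_r; lra.
      right; field; lra. }
    assert (Hb2 : INR m * h * (eps / 4 + t * Ml) <= t * (eps / 4 + t * Ml)).
    { apply Rmult_le_compat_r; auto. assert (0 <= t * Ml) by nra. lra. }
    unfold U in HN0. fold h m in HN0.
    apply abs_bounds in HN0. apply abs_bounds in G'. apply abs_bounds in Hdiff.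
    apply Rabs_le. split; nra. }
  assert (Ht0 : 0 < t) by lra.
  replace ((T t f p - f p) / t - k p) with ((T t f p - f p - t * k p) / t) by (field; lra).
  rewrite Rabs_div by lra. rewrite (Rabs_pos_eq t) by lra.
  apply Rle_lt_trans with (eps / 4 + t * Ml).
  - apply (Rmult_le_reg_r t); auto. field_simplify; [|lra]. 
    replace (t * (eps / 4 + t * Ml)) with ((eps / 4 + t * Ml) * t) in Key by ring. lra.
  - lra.
Qed.

Lemma gen_lin f h g k a b : inC r f -> inC r g -> generator_graph r T f h -> generator_graph r T g k ->
  generator_graph r T (fun p => a * f p + b * g p) (fun p => a * h p + b * k p).
Proof.
  intros Hf Hg G1 G2 eps He.
  set (e' := eps / (2 * (Rabs a + Rabs b + 1))).
  assert (Hab : 0 <= Rabs a /\ 0 <= Rabs b) by (split; apply Rabs_pos).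
  assert (He' : 0 < e') by (unfold e'; apply Rdiv_lt_0_compat; lra).
  destruct (G1 e' He') as [d1 [Hd1 H1]]. destruct (G2 e' He') as [d2 [Hd2 H2]].
  exists (Rmin d1 d2). split. { apply Rmin_pos; auto. }
  intros t [Ht Ht2] p Hp.
  assert (Ht3 := Rlt_le_trans _ _ _ Ht2 (Rmin_l _ _)).
  assert (Ht4 := Rlt_le_trans _ _ _ Ht2 (Rmin_r _ _)).
  specialize (H1 t ltac:(lra) p Hp). specialize (H2 t ltac:(lra) p Hp).
  rewrite (T_lin t f g a b ltac:(lra) Hf Hg p Hp).
  replace ((a * T t f p + b * T t g p - (a * f p + b * g p)) / t - (a * h p + b * k p)) with
    (a * ((T t f p - f p) / t - h p) + b * ((T t g p - g p) / t - k p)) by (field; lra).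
  eapply Rle_lt_trans; [apply Rabs_triang|]. rewrite !Rabs_mult.
  assert (Rabs a * Rabs ((T t f p - f p) / t - h p) <= Rabs a * e') by (apply Rmult_le_compat_l; lra).
  assert (Rabs b * Rabs ((T t g p - g p) / t - k p) <= Rabs b * e') by (apply Rmult_le_compat_l; lra).
  assert (Rabs a * e' + Rabs b * e' < eps).
  { unfold e'. apply Rlt_le_trans with (eps / 2). 2: lra.
    replace (Rabs a * (eps / (2 * (Rabs a + Rabs b + 1))) + Rabs b * (eps / (2 * (Rabs a + Rabs b + 1))))
      with (eps / 2 * ((Rabs a + Rabs b) / (Rabs a + Rabs b + 1))) by (field; lra).
    rewrite <- (Rmult_1_r (eps / 2)) at 2. apply Rmult_lt_compat_l; [lra|].
    apply (Rmult_lt_reg_r (Rabs a + Rabs b + 1)); [lra|]. field_simplify; lra. }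
  lra.
Qed.

Lemma gen_max w w' p : inC r w -> generator_graph r T w w' -> inV r p ->
  (forall q, inV r q -> w q <= w p) -> w' p <= 0.
Proof.
  intros Hw G Hp Hmax. destruct (Rle_dec (w' p) 0) as [|Hn]; auto. exfalso.
  destruct (G (w' p / 2) ltac:(lra)) as [d [Hd Hd2]].
  specialize (Hd2 (d / 2) ltac:(lra) p Hp).
  assert (HT : T (d/2) w p <= w p).
  { assert (H := T_pos (d/2) (fun q => w p * 1 + (-1) * w q) ltac:(lra)
       (inC_lin r _ _ _ _ (inC_const r 1) Hw) ltac:(intros q Hq; specialize (Hmax q Hq); lra) p Hp).
    rewrite (T_lin (d/2) (fun _ => 1) w (w p) (-1) ltac:(lra) (inC_const r 1) Hw p Hp) in H.
    rewrite (T_const (d/2) 1 ltac:(lra) p Hp) in H. lra. }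
  assert ((T (d / 2) w p - w p) / (d / 2) <= 0).
  { unfold Rdiv. apply Rmult_le_0_r; [lra|]. left. apply Rinv_0_lt_compat. lra. }
  apply Rabs_def2 in Hd2. lra.
Qed.


Lemma gen_conv f h : inC r f -> inC r h -> generator_graph r T f h -> A f h.
Proof.
  intros Hf Hh G.
  set (g := fun p => 1 * f p + (-1) * h p).
  assert (Cg : inC r g) by (apply inC_lin; auto).
  assert (HA := Rs_D 1 g Rlt_0_1 Cg).
  set (u := Rs 1 g) in *.
  set (hu := fun p => (u p - g p) / 1) in *.
  assert (Cu : inC r u) by (eapply AC1; eauto).
  assert (Chu : inC r hu) by (eapply AC2; eauto).
  assert (Gu := gen_fwd u hu HA).
  assert (Gw := gen_lin f h u hu 1 (-1) Hf Cu G Gu).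
  set (w := fun p => 1 * f p + -1 * u p) in *.
  set (w' := fun p => 1 * h p + -1 * hu p) in *.
  assert (Cw : inC r w) by (apply inC_lin; auto).
  assert (Eww : forall p, inV r p -> w' p = w p).
  { intros p _. unfold w', w, hu, g. field. }
  assert (Gw2 := gen_lin w w' w w' (-1) 0 Cw Cw Gw Gw).
  assert (Cw2 : inC r (fun p => -1 * w p + 0 * w p)) by (apply inC_lin; auto).
  destruct (max_V r w Hr1 Cw) as [p [Hp Hmax]].
  destruct (min_V r w Hr1 Cw) as [q [Hq Hmin]].
  assert (M1 := gen_max w w' p Cw Gw Hp Hmax).
  assert (M2 := gen_max _ _ q Cw2 Gw2 Hq ltac:(intros s Hs; specialize (Hmin s Hs); lra)).
  rewrite Eww in M1 by auto. simpl in M2. rewrite Eww in M2 by auto.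
  assert (W0 : forall s, inV r s -> w s = 0).
  { intros s Hs. specialize (Hmax s Hs). specialize (Hmin s Hs). lra. }
  eapply (ah_ext r A HH); [exact HA| |].
  - intros s Hs. specialize (W0 s Hs). unfold w in W0. lra.
  - intros s Hs. specialize (W0 s Hs). rewrite <- (Eww s Hs) in W0. unfold w' in W0. lra.
Qed.

Theorem abstract_main : conservative_Feller_generator r A.
Proof.
  exists T. split.
  - split; [|split; [|split; [|split; [|split; [|split]]]]].
    + intros t f Ht Hf. apply T_C; auto.
    + intros t f g a b Ht Hf Hg p Hp. apply T_lin; auto.
    + intros t f Ht Hf Hpos p Hp. apply T_pos; auto.
    + intros t Ht p Hp. apply T_const; auto.
    + intros f Hf p Hp. apply T_0; auto.
    + intros s t f Hs Ht Hf p Hp. apply T_semi; auto.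
    + intros f Hf eps He. apply T_strong; auto.
  - intros f h Hf Hh. split.
    + apply gen_conv; auto.
    + apply gen_fwd.
Qed.

End Abstract.

Lemma deriv_on_I_ext r (g g' dg dg' : R -> R) : (forall x, Iv r x -> g x = g' x) ->
  (forall x, Iv r x -> dg x = dg' x) -> deriv_on_I r g dg -> deriv_on_I r g' dg'.
Proof.
  intros E1 E2 H. apply deriv_on_I_ed. intros x Hx eps He.
  destruct (proj1 (deriv_on_I_ed r g dg) H x Hx eps He) as [d [Hd H1]].
  exists d; split; auto. intros y Hy Hne Hyx. rewrite <- !E1, <- E2; auto.
Qed.

Lemma deriv_on_I_lin r (g g' dg dg' : R -> R) a b : deriv_on_I r g dg -> deriv_on_I r g' dg' ->
  deriv_on_I r (fun x => a * g x + b * g' x) (fun x => a * dg x + b * dg' x).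
Proof.
  intros H1 H2. apply deriv_on_I_ed. intros x Hx eps He.
  set (e := eps / (2 * (Rabs a + Rabs b + 1))).
  assert (Hab : 0 <= Rabs a /\ 0 <= Rabs b) by (split; apply Rabs_pos).
  assert (Hee : 0 < e) by (unfold e; apply Rdiv_lt_0_compat; lra).
  destruct (proj1 (deriv_on_I_ed r g dg) H1 x Hx e Hee) as [d1 [Hd1 K1]].
  destruct (proj1 (deriv_on_I_ed r g' dg') H2 x Hx e Hee) as [d2 [Hd2 K2]].
  exists (Rmin d1 d2). split. { apply Rmin_pos; auto. }
  intros y Hy Hne Hyx.
  specialize (K1 y Hy Hne (Rlt_le_trans _ _ _ Hyx (Rmin_l _ _))).
  specialize (K2 y Hy Hne (Rlt_le_trans _ _ _ Hyx (Rmin_r _ _))).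
  replace ((a * g y + b * g' y - (a * g x + b * g' x)) / (y - x) - (a * dg x + b * dg' x)) with
    (a * ((g y - g x) / (y - x) - dg x) + b * ((g' y - g' x) / (y - x) - dg' x)).
  2: { field. lra. }
  eapply Rle_lt_trans; [apply Rabs_triang|]. rewrite !Rabs_mult.
  assert (Rabs a * Rabs ((g y - g x) / (y - x) - dg x) <= Rabs a * e) by (apply Rmult_le_compat_l; lra).
  assert (Rabs b * Rabs ((g' y - g' x) / (y - x) - dg' x) <= Rabs b * e) by (apply Rmult_le_compat_l; lra).
  assert (Rabs a * e + Rabs b * e < eps).
  { unfold e. apply Rlt_le_trans with (eps / 2). 2: lra.
    replace (Rabs a * (eps / (2 * (Rabs a + Rabs b + 1))) + Rabs b * (eps / (2 * (Rabs a + Rabs b + 1))))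
      with (eps / 2 * ((Rabs a + Rabs b) / (Rabs a + Rabs b + 1))) by (field; lra).
    rewrite <- (Rmult_1_r (eps / 2)) at 2. apply Rmult_lt_compat_l; [lra|].
    apply (Rmult_lt_reg_r (Rabs a + Rabs b + 1)); [lra|]. field_simplify; lra. }
  lra.
Qed.

Lemma deriv_on_I_const r c : deriv_on_I r (fun _ => c) (fun _ => 0).
Proof.
  apply deriv_on_I_ed. intros x Hx eps He. exists 1. split; [lra|].
  intros y Hy Hne Hyx. replace ((c - c) / (y - x) - 0) with 0 by (field; lra).
  rewrite Rabs_R0; auto.
Qed.

Lemma div_np_neg a b : a <= 0 -> b < 0 -> 0 <= a / b.
Proof. intros Ha Hb. replace (a / b) with ((- a) / (- b)) by (field; lra).
  apply Rmult_le_pos; [lra|]. left; apply Rinv_0_lt_compat; lra. Qed.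

Lemma div_np_pos a b : a <= 0 -> 0 < b -> a / b <= 0.
Proof. intros Ha Hb. unfold Rdiv. apply Rmult_le_0_r; auto. left; apply Rinv_0_lt_compat; lra. Qed.

Lemma max_right_deriv r (g dg : R -> R) x : deriv_on_I r g dg -> Iv r x -> x < 1 ->
  (forall y, Iv r y -> g y <= g x) -> dg x <= 0.
Proof.
  intros Hd Hx Hx1 Hmax.
  destruct (Rle_dec (dg x) 0) as [|Hgt]; auto; exfalso.
  destruct (proj1 (deriv_on_I_ed r g dg) Hd x Hx (dg x / 2) ltac:(lra)) as [d [Hd0 H1]].
  set (m := Rmin (d / 2) ((1 - x) / 2)).
  assert (Hm1 := Rmin_l (d / 2) ((1 - x) / 2)). assert (Hm2 := Rmin_r (d / 2) ((1 - x) / 2)).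
  assert (Hm0 : 0 < m) by (apply Rmin_pos; lra). fold m in Hm1, Hm2.
  set (y := x + m).
  assert (Hy : Iv r y) by (unfold y, Iv in *; lra).
  specialize (H1 y Hy ltac:(unfold y; lra) ltac:(unfold y; rewrite Rabs_right; lra)).
  apply Rabs_def2 in H1. specialize (Hmax y Hy).
  assert ((g y - g x) / (y - x) <= 0) by (apply div_np_pos; [lra| unfold y; lra]).
  lra.
Qed.

Lemma max_left_deriv r (g dg : R -> R) x : deriv_on_I r g dg -> Iv r x -> r < x ->
  (forall y, Iv r y -> g y <= g x) -> 0 <= dg x.
Proof.
  intros Hd Hx Hx1 Hmax.
  destruct (Rle_dec 0 (dg x)) as [|Hgt]; auto; exfalso.
  destruct (proj1 (deriv_on_I_ed r g dg) Hd x Hx (- dg x / 2) ltac:(lra)) as [d [Hd0 H1]].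
  set (m := Rmin (d / 2) ((x - r) / 2)).
  assert (Hm1 := Rmin_l (d / 2) ((x - r) / 2)). assert (Hm2 := Rmin_r (d / 2) ((x - r) / 2)).
  assert (Hm0 : 0 < m) by (apply Rmin_pos; lra). fold m in Hm1, Hm2.
  set (y := x - m).
  assert (Hy : Iv r y) by (unfold y, Iv in *; lra).
  specialize (H1 y Hy ltac:(unfold y; lra) ltac:(unfold y; rewrite Rabs_left; lra)).
  apply Rabs_def2 in H1. specialize (Hmax y Hy).
  assert (0 <= (g y - g x) / (y - x)) by (apply div_np_neg; [lra| unfold y; lra]).
  lra.
Qed.

Lemma max_second_right r (g g1 g2 : R -> R) x : r <= 1 -> C2_on_I r g g1 g2 -> Iv r x -> x < 1 ->
  g1 x = 0 -> (forall y, Iv r y -> g y <= g x) -> g2 x <= 0.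
Proof.
  intros Hr [Hd1 [Hd2 [Hc1 Hc2]]] Hx Hx1 Hg1 Hmax.
  destruct (Rle_dec (g2 x) 0) as [|Hgt]; auto; exfalso.
  destruct (proj1 (cont_on_I_ed r g2) Hc2 x Hx (g2 x / 2) ltac:(lra)) as [d [Hd0 H1]].
  set (b := x + Rmin (d / 2) ((1 - x) / 2)).
  assert (Hm1 := Rmin_l (d / 2) ((1 - x) / 2)). assert (Hm2 := Rmin_r (d / 2) ((1 - x) / 2)).
  assert (Hm0 : 0 < Rmin (d / 2) ((1 - x) / 2)) by (apply Rmin_pos; lra).
  assert (Hpos2 : forall c, x <= c <= b -> 0 < g2 c).
  { intros c Hc. assert (Hc' : Iv r c) by (unfold Iv, b in *; lra).
    specialize (H1 c Hc' ltac:(unfold b in Hc; rewrite Rabs_right; lra)).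
    apply Rabs_def2 in H1. lra. }
  assert (Hpos1 : forall y, x < y <= b -> 0 < g1 y).
  { intros y Hy. destruct (MVT_I r g1 g2 x y Hr Hd2) as [c [Hc Heq]]; try (unfold Iv, b in *; lra).
    specialize (Hpos2 c ltac:(lra)). assert (0 < g2 c * (y - x)) by (apply Rmult_lt_0_compat; lra). lra. }
  set (mm := (x + b) / 2).
  destruct (MVT_I r g g1 x mm Hr Hd1) as [c [Hc Heq]]; try (unfold Iv, mm, b in *; lra).
  assert (0 <= g1 c).
  { destruct (Req_dec c x) as [->|Hne]; [lra|]. left. apply Hpos1. unfold mm, b in *; lra. }
  destruct (MVT_I r g g1 mm b Hr Hd1) as [c' [Hc' Heq']]; try (unfold Iv, mm, b in *; lra).
  assert (0 < g1 c') by (apply Hpos1; unfold mm, b in *; lra).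
  assert (0 <= g1 c * (mm - x)) by (apply Rmult_le_pos; unfold mm, b in *; lra).
  assert (0 < g1 c' * (b - mm)) by (apply Rmult_lt_0_compat; unfold mm, b in *; lra).
  assert (Hb : Iv r b) by (unfold Iv, b in *; lra).
  specialize (Hmax b Hb). lra.
Qed.

Lemma max_second_left r (g g1 g2 : R -> R) : r < 1 -> C2_on_I r g g1 g2 ->
  g1 1 = 0 -> (forall y, Iv r y -> g y <= g 1) -> g2 1 <= 0.
Proof.
  intros Hr [Hd1 [Hd2 [Hc1 Hc2]]] Hg1 Hmax.
  assert (Hx : Iv r 1) by (unfold Iv; lra).
  destruct (Rle_dec (g2 1) 0) as [|Hgt]; auto; exfalso.
  destruct (proj1 (cont_on_I_ed r g2) Hc2 1 Hx (g2 1 / 2) ltac:(lra)) as [d [Hd0 H1]].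
  set (a := 1 - Rmin (d / 2) ((1 - r) / 2)).
  assert (Hm1 := Rmin_l (d / 2) ((1 - r) / 2)). assert (Hm2 := Rmin_r (d / 2) ((1 - r) / 2)).
  assert (Hm0 : 0 < Rmin (d / 2) ((1 - r) / 2)) by (apply Rmin_pos; lra).
  assert (Hpos2 : forall c, a <= c <= 1 -> 0 < g2 c).
  { intros c Hc. assert (Hc' : Iv r c) by (unfold Iv, a in *; lra).
    specialize (H1 c Hc' ltac:(unfold a in Hc; rewrite Rabs_left1; lra)).
    apply Rabs_def2 in H1. lra. }
  assert (Hneg1 : forall y, a <= y < 1 -> g1 y < 0).
  { intros y Hy. destruct (MVT_I r g1 g2 y 1 ltac:(lra) Hd2) as [c [Hc Heq]]; try (unfold Iv, a in *; lra).
    specialize (Hpos2 c ltac:(lra)). assert (0 < g2 c * (1 - y)) by (apply Rmult_lt_0_compat; lra). lra. }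
  set (mm := (a + 1) / 2).
  destruct (MVT_I r g g1 a mm ltac:(lra) Hd1) as [c [Hc Heq]]; try (unfold Iv, mm, a in *; lra).
  assert (g1 c < 0) by (apply Hneg1; unfold mm, a in *; lra).
  destruct (MVT_I r g g1 mm 1 ltac:(lra) Hd1) as [c' [Hc' Heq']]; try (unfold Iv, mm, a in *; lra).
  assert (g1 c' <= 0).
  { destruct (Req_dec c' 1) as [->|Hne]; [lra|]. left. apply Hneg1. unfold mm, a in *; lra. }
  assert (g1 c * (mm - a) < 0).
  { assert (0 < mm - a) by (unfold mm, a in *; lra). nra. }
  assert (g1 c' * (1 - mm) <= 0).
  { assert (0 < 1 - mm) by (unfold mm, a in *; lra). nra. }
  assert (Ha : Iv r a) by (unfold Iv, a in *; lra).
  specialize (Hmax a Ha). lra.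
Qed.

Section AIprops.
Variables r kappa alpha beta : R.
Hypothesis Hr : 0 < r < 1.
Hypothesis Hk : 0 < kappa.
Hypothesis Ha : 0 <= alpha.
Hypothesis Hb : 0 <= beta.

Let Hr1 : r <= 1. Proof. lra. Qed.
Let Iv1 : Iv r 1. Proof. unfold Iv; lra. Qed.

Lemma AI_C f h : AI r kappa alpha beta f h -> inC r f /\ inC r h.
Proof.
  intros [Hf [g1 [g2 [[Hd1 [Hd2 [Hc1 Hc2]]] [B1 [B2 [H1 H2]]]]]]].
  split; auto. unfold inC.
  eapply cont_on_I_ext; [intros x Hx; symmetry; apply H2; auto|].
  apply cont_on_I_plus; apply cont_on_I_mult; auto.
  - apply cont_on_I_mult; [apply cont_on_I_const|]. apply cont_on_I_mult; [apply cont_on_I_id|].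
    apply cont_on_I_mult; [apply cont_on_I_id|apply cont_on_I_const].
  - apply cont_on_I_mult; [apply cont_on_I_const|apply cont_on_I_id].
Qed.

Lemma AI_ext f h f' h' : AI r kappa alpha beta f h -> eqV r f f' -> eqV r h h' ->
  AI r kappa alpha beta f' h'.
Proof.
  intros [Hf [g1 [g2 [[Hd1 [Hd2 [Hc1 Hc2]]] [B1 [B2 [H1 H2]]]]]]] E1 E2.
  split. { eapply inC_ext; eauto. }
  exists g1, g2. split; [|split; [|split; [|split]]]; auto.
  - split; auto. eapply deriv_on_I_ext; [| |exact Hd1]; auto.
    intros x Hx; apply (E1 (VL x)); auto.
  - rewrite <- (E1 VPlus I), <- (E1 (VL 1) Iv1). auto.
  - rewrite <- (E2 VPlus I), <- (E1 VPlus I), <- (E1 (VL 1) Iv1). auto.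
  - intros x Hx. rewrite <- (E2 (VL x) Hx). auto.
Qed.

Lemma AI_lin f h g k a b : AI r kappa alpha beta f h -> AI r kappa alpha beta g k ->
  AI r kappa alpha beta (fun p => a * f p + b * g p) (fun p => a * h p + b * k p).
Proof.
  intros [Hf [f1 [f2 [[Hd1 [Hd2 [Hc1 Hc2]]] [B1 [B2 [H1 H2]]]]]]]
         [Hg [g1 [g2 [[Kd1 [Kd2 [Kc1 Kc2]]] [C1 [C2 [K1 K2]]]]]]].
  split. { apply inC_lin; auto. }
  exists (fun x => a * f1 x + b * g1 x), (fun x => a * f2 x + b * g2 x).
  split; [|split; [|split; [|split]]].
  - split; [|split; [|split]].
    + apply (deriv_on_I_lin r (fun x => f (VL x)) (fun x => g (VL x))); auto.
    + apply deriv_on_I_lin; auto.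
    + apply cont_on_I_lin; auto.
    + apply cont_on_I_lin; auto.
  - simpl. rewrite B1, C1. ring.
  - simpl. rewrite B2, C2. ring.
  - simpl. rewrite H1, K1. ring.
  - intros x Hx. simpl. rewrite H2, K2 by auto. ring.
Qed.

Lemma AI_1 : AI r kappa alpha beta (fun _ => 1) (fun _ => 0).
Proof.
  split. { apply inC_const. }
  exists (fun _ => 0), (fun _ => 0). split; [|split; [|split; [|split]]].
  - split; [|split; [|split]].
    + apply (deriv_on_I_const r 1).
    + apply deriv_on_I_const.
    + apply cont_on_I_const.
    + apply cont_on_I_const.
  - reflexivity.
  - ring.
  - ring.
  - intros; ring.
Qed.

Lemma AI_max f h p : AI r kappa alpha beta f h -> inV r p -> (forall q, inV r q -> f q <= f p) -> h p <= 0.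
Proof.
  intros [Hf [g1 [g2 [HC2 [B1 [B2 [H1 H2]]]]]]] Hp Hmax.
  assert (HC2' := HC2). destruct HC2' as [Hd1 [Hd2 [Hc1 Hc2]]].
  destruct p as [x|].
  - simpl in Hp. rewrite H2 by auto.
    assert (Hm : forall y, Iv r y -> f (VL y) <= f (VL x)) by (intros y Hy; apply (Hmax (VL y)); auto).
    destruct (Rlt_dec x 1) as [Hx1|Hx1].
    + assert (G1 : g1 x = 0).
      { destruct (Req_dec x r) as [->|Hne]; auto.
        assert (r < x) by (unfold Iv in Hp; lra).
        assert (U1 := max_right_deriv r _ _ x Hd1 Hp Hx1 Hm).
        assert (U2 := max_left_deriv r _ _ x Hd1 Hp H Hm). lra. }
      assert (G2 := max_second_right r _ g1 g2 x Hr1 HC2 Hp Hx1 G1 Hm).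
      rewrite G1. assert (0 <= x ^ 2) by apply pow2_ge_0.
      assert (kappa * x ^ 2 * g2 x <= 0).
      { assert (0 <= kappa * x ^ 2) by (apply Rmult_le_pos; lra). nra. }
      lra.
    + assert (x = 1) by (unfold Iv in Hp; lra). subst x.
      assert (U2 := max_left_deriv r _ _ 1 Hd1 Iv1 ltac:(lra) Hm).
      assert (Hplus := Hmax VPlus I).
      assert (g1 1 <= 0) by (rewrite B2; apply Rmult_le_0_l; lra).
      assert (G1 : g1 1 = 0) by lra.
      assert (G2 := max_second_left r _ g1 g2 ltac:(lra) HC2 G1 Hm).
      rewrite G1. replace (kappa * 1 ^ 2 * g2 1 + kappa * 1 * 0) with (kappa * g2 1) by ring.
      apply Rmult_le_0_l; lra.
  - rewrite H1. assert (Hx := Hmax (VL 1) Iv1).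
    replace (- alpha * f VPlus + alpha * f (VL 1)) with (alpha * (f (VL 1) - f VPlus)) by ring.
    apply Rmult_le_0_l; lra.
Qed.

End AIprops.

Lemma cont_on_I_derive r (F : R -> R) : (forall x, ex_derive F x) -> cont_on_I r F.
Proof. intros H. apply cont_on_I_global. intros x. apply (@ex_derive_continuous R_AbsRing R_NormedModule F x (H x)). Qed.

Section Tests.
Variables r kappa alpha beta : R.
Hypothesis Hr : 0 < r < 1.
Hypothesis Hk : 0 < kappa.
Hypothesis Ha : 0 <= alpha.
Hypothesis Hb : 0 <= beta.

Definition qq (eta : R) := exp (2 * (r - 1) / eta).
Definition kap (eta : R) (x : R) : R :=
  eta * (exp ((x - 1) / eta) + exp ((2 * r - x - 1) / eta)) / (1 - qq eta).
Definition kap1 (eta : R) (x : R) : R :=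
  (exp ((x - 1) / eta) - exp ((2 * r - x - 1) / eta)) / (1 - qq eta).
Definition kap2 (eta : R) (x : R) : R :=
  (exp ((x - 1) / eta) + exp ((2 * r - x - 1) / eta)) / (eta * (1 - qq eta)).

Lemma qq_lt eta : 0 < eta -> qq eta < 1.
Proof.
  intros He. unfold qq.
  assert (0 < 2 * (1 - r) / eta) by (apply Rdiv_lt_0_compat; lra).
  assert (H0 : exp (2 * (r - 1) / eta) < exp 0).
  { apply exp_increasing. replace (2 * (r - 1) / eta) with (- (2 * (1 - r) / eta)) by (field; lra). lra. }
  rewrite exp_0 in H0. exact H0.
Qed.

Lemma qq_half eta : 0 < eta -> eta <= 2 * (1 - r) -> qq eta <= / 2.
Proof.
  intros He He2. unfold qq.
  set (z := 2 * (1 - r) / eta).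
  assert (Hz : 1 <= z).
  { unfold z. apply (Rmult_le_reg_r eta); auto. field_simplify; lra. }
  assert (E : 2 * (r - 1) / eta = - z) by (unfold z; field; lra).
  rewrite E, exp_Ropp.
  assert (H1 := exp_ineq1 z ltac:(lra)).
  apply Rinv_le_contravar; lra.
Qed.

Lemma kap_d eta x : 0 < eta -> is_derive (kap eta) x (kap1 eta x).
Proof.
  intros He. assert (Hq := qq_lt eta He). unfold kap, kap1. unfold qq in *.
  auto_derive. auto.
  replace ((x + - (1)) * / eta) with ((x - 1) / eta) by (field; lra).
  replace ((2 * r + - x + - (1)) * / eta) with ((2 * r - x - 1) / eta) by (field; lra).
  field. lra.
Qed.

Lemma kap1_d eta x : 0 < eta -> is_derive (kap1 eta) x (kap2 eta x).
Proof.
  intros He. assert (Hq := qq_lt eta He). unfold kap1, kap2. unfold qq in *.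
  auto_derive. auto.
  replace ((x + - (1)) * / eta) with ((x - 1) / eta) by (field; lra).
  replace ((2 * r + - x + - (1)) * / eta) with ((2 * r - x - 1) / eta) by (field; lra).
  field. lra.
Qed.

Lemma kap2_d eta x : 0 < eta -> ex_derive (kap2 eta) x.
Proof.
  intros He. assert (Hq := qq_lt eta He). unfold kap2. unfold qq in *.
  auto_derive. auto.
Qed.

Lemma kap1_r eta : 0 < eta -> kap1 eta r = 0.
Proof.
  intros He. unfold kap1.
  replace ((2 * r - r - 1) / eta) with ((r - 1) / eta) by (field; lra).
  replace (exp ((r - 1) / eta) - exp ((r - 1) / eta)) with 0 by ring. unfold Rdiv. ring.
Qed.

Lemma kap1_1 eta : 0 < eta -> kap1 eta 1 = 1.
Proof.
  intros He. assert (Hq := qq_lt eta He). unfold kap1.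
  replace ((1 - 1) / eta) with 0 by (field; lra). rewrite exp_0.
  replace ((2 * r - 1 - 1) / eta) with (2 * (r - 1) / eta) by (field; lra). fold (qq eta).
  field. lra.
Qed.

Lemma exp_le1 z : z <= 0 -> exp z <= 1.
Proof.
  intros Hz. rewrite <- exp_0. destruct (Req_dec z 0) as [->|Hne]; [lra|].
  left. apply exp_increasing. lra.
Qed.

Lemma kap_bound eta x : 0 < eta -> eta <= 2 * (1 - r) -> Iv r x -> 0 <= kap eta x <= 4 * eta.
Proof.
  intros He He2 Hx. unfold Iv in Hx. assert (Hq := qq_half eta He He2).
  assert (Hq0 : 0 < qq eta) by apply exp_pos.
  unfold kap.
  assert (E1 : exp ((x - 1) / eta) <= 1) by (apply exp_le1; apply div_np_pos; lra).
  assert (E2 : exp ((2 * r - x - 1) / eta) <= 1) by (apply exp_le1; apply div_np_pos; lra).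
  assert (P1 := exp_pos ((x - 1) / eta)). assert (P2 := exp_pos ((2 * r - x - 1) / eta)).
  assert (Hinv : 0 < / (1 - qq eta) <= 2).
  { split. apply Rinv_0_lt_compat; lra.
    replace 2 with (/ (/ 2)) by field. apply Rinv_le_contravar; lra. }
  set (S := exp ((x - 1) / eta) + exp ((2 * r - x - 1) / eta)) in *.
  set (X := / (1 - qq eta)) in *.
  unfold Rdiv. fold X.
  assert (0 <= S <= 2) by (unfold S; lra).
  split.
  - apply Rmult_le_pos; [apply Rmult_le_pos|]; lra.
  - assert (S * X <= 4) by nra. nra.
Qed.

Lemma closD_AI (e : Vpt -> R) (E1 E2 : R -> R) :
  (forall x, is_derive (fun y => e (VL y)) x (E1 x)) -> (forall x, is_derive E1 x (E2 x)) ->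
  (forall x, ex_derive E2 x) -> E1 r = 0 -> closD r (AI r kappa alpha beta) e.
Proof.
  intros HE1 HE2 HE3 Hr0 eps Heps.
  set (c := e VPlus). set (E0 := e (VL 1)).
  set (D0 := Rabs (beta * (c - E0)) + Rabs (E1 1)).
  assert (HD0 : 0 <= D0) by (unfold D0; pose proof (Rabs_pos (beta * (c - E0))); pose proof (Rabs_pos (E1 1)); lra).
  set (eta := Rmin (2 * (1 - r)) (eps / (4 * (D0 + 1)))).
  assert (Heta : 0 < eta) by (apply Rmin_pos; [lra| apply Rdiv_lt_0_compat; lra]).
  assert (Heta1 : eta <= 2 * (1 - r)) by apply Rmin_l.
  assert (Heta2 : eta <= eps / (4 * (D0 + 1))) by apply Rmin_r.
  assert (Iv1 : Iv r 1) by (unfold Iv; lra).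
  assert (Hk1 := kap_bound eta 1 Heta Heta1 Iv1).
  assert (Hden : 1 <= 1 + beta * kap eta 1) by (assert (0 <= beta * kap eta 1) by (apply Rmult_le_pos; lra); lra).
  set (d := (beta * (c - E0) - E1 1) / (1 + beta * kap eta 1)).
  assert (Hd : Rabs d <= D0).
  { unfold d. rewrite Rabs_div by lra. rewrite (Rabs_pos_eq (1 + _)) by lra.
    apply Rle_trans with (Rabs (beta * (c - E0) - E1 1)).
    - unfold Rdiv. rewrite <- (Rmult_1_r (Rabs (beta * (c - E0) - E1 1))) at 2.
      apply Rmult_le_compat_l; [apply Rabs_pos|].
      pose proof (Rinv_le_contravar 1 _ Rlt_0_1 Hden) as Hi. rewrite Rinv_1 in Hi. exact Hi.
    - unfold D0. unfold Rminus at 1. eapply Rle_trans; [apply Rabs_triang|]. rewrite Rabs_Ropp. lra. }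
  set (f := fun p => match p with VL x => e (VL x) + d * kap eta x | VPlus => c end).
  set (g1 := fun x => E1 x + d * kap1 eta x).
  set (g2 := fun x => E2 x + d * kap2 eta x).
  set (h := fun p => match p with
                     | VL x => kappa * x ^ 2 * g2 x + kappa * x * g1 x
                     | VPlus => - alpha * c + alpha * f (VL 1) end).
  assert (Df : forall x, is_derive (fun y => f (VL y)) x (g1 x)).
  { intros x. unfold f, g1. apply (is_derive_plus (fun y => e (VL y)) (fun y => d * kap eta y)); auto.
    apply (is_derive_scal (kap eta)). apply kap_d; auto. }
  assert (Dg1 : forall x, is_derive g1 x (g2 x)).
  { intros x. unfold g1, g2. apply (is_derive_plus E1 (fun y => d * kap1 eta y)); auto.
    apply (is_derive_scal (kap1 eta)). apply kap1_d; auto. }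
  exists f, h. split.
  - split.
    + unfold inC. apply cont_on_I_derive. intros x. eexists; apply Df.
    + exists g1, g2. split; [|split; [|split; [|split]]].
      * split; [|split; [|split]].
        -- apply deriv_on_I_global. intros x _. apply Df.
        -- apply deriv_on_I_global. intros x _. apply Dg1.
        -- apply cont_on_I_derive. intros x. eexists; apply Dg1.
        -- apply cont_on_I_derive. intros x. unfold g2.
           apply (ex_derive_plus E2 (fun y => d * kap2 eta y)); auto.
           apply (ex_derive_scal (kap2 eta)). apply kap2_d; auto.
      * unfold g1. rewrite Hr0, kap1_r by auto. ring.
      * unfold g1. rewrite kap1_1 by auto. unfold f. fold E0. unfold d. field. lra.
      * reflexivity.
      * intros x _. reflexivity.
  - intros [x|] Hp.
    + simpl in Hp. unfold f. replace (e (VL x) + d * kap eta x - e (VL x)) with (d * kap eta x) by ring.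
      assert (Hkx := kap_bound eta x Heta Heta1 Hp).
      rewrite Rabs_mult, (Rabs_pos_eq (kap eta x)) by lra.
      apply Rle_trans with (D0 * (4 * eta)).
      { apply Rmult_le_compat; try lra; apply Rabs_pos. }
      apply Rle_trans with (D0 * (4 * (eps / (4 * (D0 + 1))))).
      { apply Rmult_le_compat_l; lra. }
      replace (D0 * (4 * (eps / (4 * (D0 + 1))))) with (eps * (D0 / (D0 + 1))) by (field; lra).
      rewrite <- (Rmult_1_r eps) at 2. apply Rmult_le_compat_l; [lra|].
      apply (Rmult_le_reg_r (D0 + 1)); [lra|]. field_simplify; lra.
    + unfold f. replace (c - e VPlus) with 0 by (unfold c; ring). rewrite Rabs_R0. lra.
Qed.

Lemma closD_e1 : closD r (AI r kappa alpha beta) (e1 r).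
Proof.
  apply (closD_AI (e1 r) (fun x => 2 * (x - r)) (fun _ => 2)).
  - intros x. simpl. auto_derive; auto. ring.
  - intros x. auto_derive; auto. ring.
  - intros x. auto_derive; auto.
  - ring.
Qed.

Lemma closD_e2 : closD r (AI r kappa alpha beta) (e2 r).
Proof.
  apply (closD_AI (e2 r) (fun x => 4 * (x - r) ^ 3) (fun x => 12 * (x - r) ^ 2)).
  - intros x. simpl. auto_derive; auto. ring.
  - intros x. auto_derive; auto. ring.
  - intros x. auto_derive; auto.
  - ring.
Qed.

Lemma closD_eI : closD r (AI r kappa alpha beta) eI.
Proof.
  apply (closD_AI eI (fun _ => 0) (fun _ => 0)).
  - intros x. simpl. auto_derive; auto.
  - intros x. auto_derive; auto.
  - intros x. auto_derive; auto.
  - reflexivity.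
Qed.

End Tests.

Lemma D_comp (f g : R -> R) x df dg : is_derive f (g x) df -> is_derive g x dg ->
  is_derive (fun t => f (g t)) x (dg * df).
Proof. intros H1 H2. apply (is_derive_comp f g x df dg H1 H2). Qed.
Lemma D_mult (f g : R -> R) x df dg : is_derive f x df -> is_derive g x dg ->
  is_derive (fun t => f t * g t) x (df * g x + f x * dg).
Proof. intros H1 H2. apply (is_derive_mult f g x df dg H1 H2). intros; apply Rmult_comm. Qed.
Lemma Cc_plus (f g : R -> R) x : continuous f x -> continuous g x -> continuous (fun t => f t + g t) x.
Proof. intros H1 H2. apply (continuous_plus f g x H1 H2). Qed.
Lemma Cc_mult (f g : R -> R) x : continuous f x -> continuous g x -> continuous (fun t => f t * g t) x.
Proof. intros H1 H2. apply (continuous_mult f g x H1 H2). Qed.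
Lemma Cc_comp (f g : R -> R) x : continuous f x -> continuous g (f x) -> continuous (fun t => g (f t)) x.
Proof. intros H1 H2. apply (continuous_comp f g x H1 H2). Qed.
Lemma Cc_ext (f g : R -> R) x : (forall t, f t = g t) -> continuous f x -> continuous g x.
Proof. intros H1 H2. apply (continuous_ext f g x H1 H2). Qed.
Lemma Cc_der (f : R -> R) x df : is_derive f x df -> continuous f x.
Proof. intros H. apply (@ex_derive_continuous R_AbsRing R_NormedModule f x). exists df; auto. Qed.
Lemma Cc_const (c x : R) : continuous (fun _ : R => c) x.
Proof. apply (@continuous_const R_UniformSpace R_UniformSpace c x). Qed.
Lemma is_derive_eq (f : R -> R) (x l l' : R) : is_derive f x l -> l = l' -> is_derive f x l'.
Proof. intros H <-; auto. Qed.
Lemma cont_on_I_loc r (F : R -> R) : (forall x, Iv r x -> continuous F x) -> cont_on_I r F.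
Proof. intros H x Hx. eapply filterlim_filter_le_1; [apply filter_le_within| apply H; auto]. Qed.
Lemma contpt_of (f : R -> R) x : continuous f x -> continuity_pt f x.
Proof. intros H. apply continuity_pt_filterlim. exact H. Qed.

Section Res.
Variables r kappa alpha beta : R.
Hypothesis Hr : 0 < r < 1.
Hypothesis Hk : 0 < kappa.
Hypothesis Ha : 0 <= alpha.
Hypothesis Hb : 0 <= beta.
Variable eta : R.
Hypothesis He : 0 < eta.
Variable g : Vpt -> R.
Hypothesis Hg : inC r g.

Definition lo := ln r.
Definition aa := / sqrt (eta * kappa).
Definition G (y : R) := g (VL (clamp r (exp y))).
Definition Jp (x : R) := RInt (fun y => exp (aa * y) * G y) lo x.
Definition Jm (x : R) := RInt (fun y => exp ((- aa) * y) * G y) lo x.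
Definition Up (x : R) := - (aa / 2) * (exp (aa * x) * Jm x - exp ((- aa) * x) * Jp x).
Definition Up1 (x : R) := - (aa ^ 2 / 2) * (exp (aa * x) * Jm x + exp ((- aa) * x) * Jp x).
Definition Hh (x : R) := (exp (aa * (x - lo)) + exp ((- aa) * (x - lo))) / 2.
Definition Hh1 (x : R) := aa * (exp (aa * (x - lo)) - exp ((- aa) * (x - lo))) / 2.

Lemma aa_pos : 0 < aa.
Proof. unfold aa. apply Rinv_0_lt_compat. apply sqrt_lt_R0. nra. Qed.

Lemma aa2 : kappa * aa ^ 2 = / eta.
Proof.
  unfold aa. rewrite <- Rinv_pow. simpl. rewrite Rmult_1_r. rewrite sqrt_sqrt by nra.
  field. split; lra. apply Rgt_not_eq. apply sqrt_lt_R0. nra.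
Qed.

Lemma lo_neg : lo < 0.
Proof. unfold lo. rewrite <- ln_1. apply ln_increasing; lra. Qed.

Lemma G_cont y : continuous G y.
Proof.
  unfold G. apply (Cc_comp exp (fun z => g (VL (clamp r z))) y).
  - apply (Cc_der exp y (exp y)). auto_derive; auto. ring.
  - apply (continuous_clamp r (fun z => g (VL z))); [lra| exact Hg].
Qed.

Lemma integrand_cont s y : continuous (fun y => exp (s * y) * G y) y.
Proof.
  apply Cc_mult. apply (Cc_der _ y (s * exp (s * y))). auto_derive; auto. ring. apply G_cont.
Qed.

Lemma side_cond s x : ex_RInt (fun y => exp (s * y) * G y) lo x /\
  locally x (fun x0 => continuity_pt (fun x1 => exp (s * x1) * G x1) x0).
Proof.
  split.
  - apply (@ex_RInt_continuous R_CompleteNormedModule). intros z _. apply integrand_cont.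
  - exists (mkposreal 1 Rlt_0_1). intros y _. apply contpt_of. apply integrand_cont.
Qed.

Lemma exp_neg_inv x : exp (- aa * x) = / exp (aa * x).
Proof. rewrite <- exp_Ropp. f_equal. ring. Qed.

Lemma Jp_d x : is_derive Jp x (exp (aa * x) * G x).
Proof.
  unfold Jp. auto_derive.
  - destruct (side_cond aa x) as [S3 S4]. repeat split; auto.
  - ring.
Qed.

Lemma Jm_d x : is_derive Jm x (exp (- aa * x) * G x).
Proof.
  unfold Jm. auto_derive.
  - destruct (side_cond (- aa) x) as [S3 S4]. repeat split; auto.
  - ring.
Qed.

Lemma Up_d x : is_derive Up x (Up1 x).
Proof.
  unfold Up, Up1. auto_derive.
  - repeat split; eexists; [apply Jm_d| apply Jp_d].
  - replace (Derive (fun x0 => Jm x0) x) with (exp (- aa * x) * G x) by (symmetry; apply is_derive_unique; apply Jm_d).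
    replace (Derive (fun x0 => Jp x0) x) with (exp (aa * x) * G x) by (symmetry; apply is_derive_unique; apply Jp_d).
    set (A1 := Jm x). set (A2 := Jp x). set (A3 := G x). set (E1 := exp (aa * x)). set (E2 := exp (- aa * x)). field.
Qed.

Lemma Up1_d x : is_derive Up1 x (aa ^ 2 * (Up x - G x)).
Proof.
  unfold Up, Up1. auto_derive.
  - repeat split; eexists; [apply Jm_d| apply Jp_d].
  - replace (Derive (fun x0 => Jm x0) x) with (exp (- aa * x) * G x) by (symmetry; apply is_derive_unique; apply Jm_d).
    replace (Derive (fun x0 => Jp x0) x) with (exp (aa * x) * G x) by (symmetry; apply is_derive_unique; apply Jp_d).
    rewrite exp_neg_inv. assert (0 < exp (aa * x)) by apply exp_pos. field. lra.
Qed.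

Lemma Hh_d x : is_derive Hh x (Hh1 x).
Proof. unfold Hh, Hh1. auto_derive; auto. unfold Rminus. field. Qed.

Lemma Hh1_d x : is_derive Hh1 x (aa ^ 2 * Hh x).
Proof. unfold Hh, Hh1. auto_derive; auto. unfold Rminus. field. Qed.

Lemma Hh1_lo : Hh1 lo = 0.
Proof. unfold Hh1. replace (lo - lo) with 0 by ring. rewrite !Rmult_0_r, exp_0. field. Qed.

Lemma Up1_lo : Up1 lo = 0.
Proof. unfold Up1, Jp, Jm. rewrite !RInt_point. simpl. unfold zero. simpl. ring. Qed.

Lemma Hh_pos0 : 0 < Hh 0.
Proof. unfold Hh. assert (H1 := exp_pos (aa * (0 - lo))). assert (H2 := exp_pos (- aa * (0 - lo))). lra. Qed.

Lemma Hh1_pos0 : 0 < Hh1 0.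
Proof.
  unfold Hh1. assert (Ha0 := aa_pos). assert (Hl := lo_neg).
  assert (exp (- aa * (0 - lo)) < exp (aa * (0 - lo))).
  { apply exp_increasing. nra. }
  assert (0 < aa * (exp (aa * (0 - lo)) - exp (- aa * (0 - lo)))) by (apply Rmult_lt_0_compat; lra).
  lra.
Qed.

Definition gp := g VPlus.
Definition dd := 1 + eta * alpha.
Definition CC := (beta * (gp - Up 0) / dd - Up1 0) / (Hh1 0 + beta * Hh 0 / dd).
Definition Uf (x : R) := CC * Hh x + Up x.
Definition U1 (x : R) := CC * Hh1 x + Up1 x.
Definition U2 (x : R) := aa ^ 2 * (Uf x - G x).
Definition cp := (gp + eta * alpha * Uf 0) / dd.

Lemma dd_pos : 0 < dd.
Proof. unfold dd. assert (0 <= eta * alpha) by (apply Rmult_le_pos; lra). lra. Qed.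

Lemma Uf_d x : is_derive Uf x (U1 x).
Proof.
  unfold Uf, U1. apply (is_derive_plus (fun x => CC * Hh x) Up x).
  apply is_derive_scal. apply Hh_d. apply Up_d.
Qed.

Lemma U1_d x : is_derive U1 x (U2 x).
Proof.
  unfold U1. eapply is_derive_eq.
  apply (is_derive_plus (fun x => CC * Hh1 x) Up1 x).
  apply is_derive_scal. apply Hh1_d. apply Up1_d.
  unfold U2, Uf. simpl. unfold plus. simpl. ring.
Qed.

Lemma U1_lo : U1 lo = 0.
Proof. unfold U1. rewrite Hh1_lo, Up1_lo. ring. Qed.

Lemma BC1 : U1 0 = beta * (cp - Uf 0).
Proof.
  assert (H1 := dd_pos). assert (H2 := Hh_pos0). assert (H3 := Hh1_pos0).
  assert (H4 : 0 < Hh1 0 + beta * Hh 0 / dd).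
  { assert (0 <= beta * Hh 0 / dd) by (apply Rmult_le_pos; [nra| left; apply Rinv_0_lt_compat; lra]). lra. }
  unfold U1, cp, Uf, CC. unfold dd in *. field. split; [lra|]. assert (0 < Hh1 0 * (1 + eta * alpha)) by nra. assert (0 <= beta * Hh 0) by nra. lra.
Qed.

Lemma Dln x : 0 < x -> is_derive ln x (/ x).
Proof. intros. auto_derive. lra. field. lra. Qed.

Lemma Dinv x : 0 < x -> is_derive (fun t => / t) x (- / x ^ 2).
Proof. intros. auto_derive. lra. field. lra. Qed.

Lemma U2_cont y : continuous U2 y.
Proof.
  unfold U2. apply (Cc_ext (fun t => aa ^ 2 * (Uf t + (-1) * G t))).
  { intros t. ring. }
  apply Cc_mult. apply Cc_const. apply Cc_plus. apply (Cc_der _ _ _ (Uf_d y)).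
  apply Cc_mult. apply Cc_const. apply G_cont.
Qed.

Lemma AI_res : exists u h, AI r kappa alpha beta u h /\ forall p, inV r p -> u p - eta * h p = g p.
Proof.
  set (u := fun p => match p with VL x => Uf (ln x) | VPlus => cp end).
  set (h := fun p => (u p - g p) / eta).
  set (g1 := fun x => U1 (ln x) / x).
  set (g2 := fun x => (U2 (ln x) - U1 (ln x)) / x ^ 2).
  assert (Du : forall x, 0 < x -> is_derive (fun x => u (VL x)) x (g1 x)).
  { intros x Hx. eapply is_derive_eq. apply (D_comp Uf ln x _ _ (Uf_d (ln x)) (Dln x Hx)).
    unfold g1. field. lra. }
  assert (Dg1 : forall x, 0 < x -> is_derive g1 x (g2 x)).
  { intros x Hx. apply (is_derive_ext (fun t => U1 (ln t) * / t)). { intros t. reflexivity. }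
    eapply is_derive_eq. apply (D_mult (fun t => U1 (ln t)) (fun t => / t) x).
    apply (D_comp U1 ln x _ _ (U1_d (ln x)) (Dln x Hx)). apply (Dinv x Hx).
    unfold g2. field. lra. }
  assert (Ivpos : forall x, Iv r x -> 0 < x) by (intros x Hx; unfold Iv in Hx; lra).
  exists u, h. split.
  - assert (Hd1 : deriv_on_I r (fun x => u (VL x)) g1).
    { apply deriv_on_I_global. intros x Hx. apply Du; auto. }
    assert (Hd2 : deriv_on_I r g1 g2).
    { apply deriv_on_I_global. intros x Hx. apply Dg1; auto. }
    split.
    + unfold inC. eapply deriv_cont; eauto.
    + exists g1, g2. split; [|split; [|split; [|split]]].
      * split; [|split; [|split]]; auto.
        -- eapply deriv_cont; eauto.
        -- apply cont_on_I_loc. intros x Hx. specialize (Ivpos x Hx). unfold g2.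
           apply (Cc_ext (fun t => (U2 (ln t) + (-1) * U1 (ln t)) * / t ^ 2)).
           { intros t. unfold Rdiv. ring. }
           assert (Cln : continuous ln x) by (apply (Cc_der _ _ _ (Dln x Ivpos))).
           apply Cc_mult.
           ++ apply Cc_plus. apply (Cc_comp ln U2 x Cln (U2_cont _)).
              apply Cc_mult. apply Cc_const. apply (Cc_comp ln U1 x Cln (Cc_der _ _ _ (U1_d _))).
           ++ apply (@ex_derive_continuous R_AbsRing R_NormedModule (fun t => / t ^ 2) x).
              auto_derive. nra.
      * unfold g1. fold lo. rewrite U1_lo. field. lra.
      * unfold g1, u. rewrite ln_1. rewrite BC1. field.
      * unfold h, u. rewrite ln_1. unfold cp, gp. unfold dd.
        assert (0 <= eta * alpha) by (apply Rmult_le_pos; lra). field. split; lra.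
      * intros x Hx. specialize (Ivpos x Hx). unfold h, u, g1, g2.
        replace (kappa * x ^ 2 * ((U2 (ln x) - U1 (ln x)) / x ^ 2) + kappa * x * (U1 (ln x) / x))
          with (kappa * U2 (ln x)) by (field; lra).
        unfold U2. replace (kappa * (aa ^ 2 * (Uf (ln x) - G (ln x)))) with
          ((kappa * aa ^ 2) * (Uf (ln x) - G (ln x))) by ring.
        rewrite aa2. unfold G. rewrite exp_ln by auto. rewrite clamp_id by auto. field. lra.
  - intros p Hp. unfold h. field. lra.
Qed.

End Res.

Theorem proposition7p5 (r kappa alpha beta : R) :
  0 < r < 1 -> 0 < kappa -> 0 <= alpha -> 0 <= beta ->
  conservative_Feller_generator r (AI r kappa alpha beta).
Proof.
  intros Hr Hk Ha Hb.
  apply (abstract_main r (AI r kappa alpha beta)).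
  constructor.
  - exact Hr.
  - intros f h H. apply (AI_C r kappa alpha beta); auto.
  - intros f h f' h' H1 H2 H3. apply (AI_ext r kappa alpha beta) with f h; auto.
  - intros f h g k a b H1 H2. apply (AI_lin r kappa alpha beta); auto.
  - apply (AI_1 r kappa alpha beta); auto.
  - intros f h p H1 H2 H3. apply (AI_max r kappa alpha beta) with f; auto.
  - intros eta Heta g Hg. apply (AI_res r kappa alpha beta); auto.
  - apply (closD_e1 r kappa alpha beta); auto.
  - apply (closD_e2 r kappa alpha beta); auto.
  - apply (closD_eI r kappa alpha beta); auto.
Qed.
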